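(* Under the event-triggered closed loop described in the context, for all $j$ and all $t\in(t_j,t_{j+1})$, $$\dot d(t)^2\le\rho_1d^2(t)+\alpha_1\|\hat w[t]\|^2+\alpha_2|\hat w(1,t)|^2+\alpha_3|\tilde w(0,t)|^2,$$ where $\rho_1=6\varepsilon^2k(1)^2$, $\alpha_1=3\Big(1+\big(\int_0^1\int_0^xL^2(x,y)dydx\big)^{1/2}\Big)^2\int_0^1\big(\varepsilon k''(y)+\varepsilon k(1)k(y)+\lambda k(y)\big)^2dy+6\big(\varepsilon qk(1)+\varepsilon k'(1)\big)^2\int_0^1L^2(1,y)dy$, $\alpha_2=6\big(\varepsilon qk(1)+\varepsilon k'(1)\big)^2$, and $\alpha_3=6\Big(\frac{\lambda k(0)}{2}+\int_0^1k(y)p_1(y)dy\Big)^2$.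
   Context: Setup. $\varepsilon,\lambda>0$, $q>(\lambda+\varepsilon)/(2\varepsilon)$, $r=q-\lambda/(2\varepsilon)$. $I_m,J_m$ are the modified and ordinary Bessel functions of the first kind (with $I_1(z)/z,J_1(z)/z\to1/2$ at $z=0$). Kernels on $0\le y\le x\le1$: $P(x,y)=\frac{q\lambda/\varepsilon}{\sqrt{\lambda/\varepsilon+q^2}}\int_0^{x-y}e^{-q\tau/2}I_0\big(\sqrt{\lambda(2-x-y)(x-y-\tau)/\varepsilon}\big)\sinh\big(\tfrac{\sqrt{\lambda/\varepsilon+q^2}}{2}\tau\big)d\tau-\frac{\lambda}{\varepsilon}(1-y)\frac{I_1(\sqrt{\lambda((1-y)^2-(1-x)^2)/\varepsilon})}{\sqrt{\lambda((1-y)^2-(1-x)^2)/\varepsilon}}$; $Q(x,y)=\frac{q\lambda/\varepsilon}{\sqrt{q^2-\lambda/\varepsilon}}\int_0^{x-y}e^{-q\tau/2}J_0\big(\sqrt{\lambda(2-x-y)(x-y-\tau)/\varepsilon}\big)\sinh\big(\tfrac{\sqrt{q^2-\lambda/\varepsilon}}{2}\tau\big)d\tau-\frac{\lambda}{\varepsilon}(1-y)\frac{J_1(\sqrt{\lambda((1-y)^2-(1-x)^2)/\varepsilon})}{\sqrt{\lambda((1-y)^2-(1-x)^2)/\varepsilon}}$; $K(x,y)=-\frac{\lambda}{\varepsilon}x\frac{I_1(\sqrt{\lambda(x^2-y^2)/\varepsilon})}{\sqrt{\lambda(x^2-y^2)/\varepsilon}}$, $L(x,y)=-\frac{\lambda}{\varepsilon}x\frac{J_1(\sqrt{\lambda(x^2-y^2)/\varepsilon})}{\sqrt{\lambda(x^2-y^2)/\varepsilon}}$.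 Gains $p_1(x)=\varepsilon P_y(x,0)$, $p_{10}=-\lambda/(2\varepsilon)$. Let $k(y)=rK(1,y)+K_x(1,y)$. Closed loop: plant $u_t=\varepsilon u_{xx}+\lambda u$, $u_x(0,t)=0$, $u_x(1,t)+qu(1,t)=U_j$; observer $\hat u_t=\varepsilon\hat u_{xx}+\lambda\hat u+p_1(x)(u(0,t)-\hat u(0,t))$, $\hat u_x(0,t)=p_{10}(u(0,t)-\hat u(0,t))$, $\hat u_x(1,t)+q\hat u(1,t)=U_j$, for $t\in[t_j,t_{j+1})$, with $U_j=\int_0^1k(y)\hat u(y,t_j)dy$. Set $\tilde u=u-\hat u$, $\tilde w(x,t)=\tilde u(x,t)+\int_0^xQ(x,y)\tilde u(y,t)dy$, $\hat w(x,t)=\hat u(x,t)-\int_0^xK(x,y)\hat u(y,t)dy$. The input holding error is $d(t)=\int_0^1k(y)(\hat u(y,t_j)-\hat u(y,t))dy$ for $t\in[t_j,t_{j+1})$, where $0=t_0<t_1<\dots$ is any increasing sequence of update times (e.g. the one generated by the event trigger). *)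

(* Defs.v *)
From Stdlib Require Import Reals Lra Factorial.
From Coquelicot Require Import Coquelicot.
Open Scope R_scope.

Definition BesselI0 (z : R) : R :=
  Series (fun m => (z / 2) ^ (2 * m) / (INR (fact m)) ^ 2).
Definition BesselI1 (z : R) : R :=
  Series (fun m => (z / 2) ^ (2 * m + 1) / (INR (fact m) * INR (fact (m + 1)))).
Definition BesselJ0 (z : R) : R :=
  Series (fun m => (-1) ^ m * (z / 2) ^ (2 * m) / (INR (fact m)) ^ 2).
Definition BesselJ1 (z : R) : R :=
  Series (fun m => (-1) ^ m * (z / 2) ^ (2 * m + 1) / (INR (fact m) * INR (fact (m + 1)))).

(* The kernels only use I0(sqrt s), I1(sqrt s)/sqrt s, J0(sqrt s), J1(sqrt s)/sqrt s.
   These are entire functions of s; we use their power series in s directly: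
     I0sq s = I0(sqrt s),  I1q s = I1(sqrt s)/sqrt s  (= 1/2 at s = 0),
     J0sq s = J0(sqrt s),  J1q s = J1(sqrt s)/sqrt s  (= 1/2 at s = 0),
   for s >= 0 (term-by-term identical series).  This avoids spurious
   non-differentiability of Rocq's truncated sqrt at s = 0. *)
Definition I0sq (s : R) : R := Series (fun m => s ^ m / (4 ^ m * (INR (fact m)) ^ 2)).
Definition I1q  (s : R) : R :=
  Series (fun m => s ^ m / (2 ^ (2 * m + 1) * INR (fact m) * INR (fact (m + 1)))).
Definition J0sq (s : R) : R := Series (fun m => (- s) ^ m / (4 ^ m * (INR (fact m)) ^ 2)).
Definition J1q  (s : R) : R :=
  Series (fun m => (- s) ^ m / (2 ^ (2 * m + 1) * INR (fact m) * INR (fact (m + 1)))).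

Definition Pker (eps lam q : R) (x y : R) : R :=
  let a := sqrt (lam / eps + q ^ 2) in
  (q * lam / eps) / a *
    RInt (fun tau => exp (- q * tau / 2)
                     * I0sq (lam * (2 - x - y) * (x - y - tau) / eps)
                     * sinh (a / 2 * tau)) 0 (x - y)
  - lam / eps * (1 - y) * I1q (lam * ((1 - y) ^ 2 - (1 - x) ^ 2) / eps).

Definition Qker (eps lam q : R) (x y : R) : R :=
  let b := sqrt (q ^ 2 - lam / eps) in
  (q * lam / eps) / b *
    RInt (fun tau => exp (- q * tau / 2)
                     * J0sq (lam * (2 - x - y) * (x - y - tau) / eps)
                     * sinh (b / 2 * tau)) 0 (x - y)
  - lam / eps * (1 - y) * J1q (lam * ((1 - y) ^ 2 - (1 - x) ^ 2) / eps).

Definition Kker (eps lam : R) (x y : R) : R :=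
  - lam / eps * x * I1q (lam * (x ^ 2 - y ^ 2) / eps).

Definition Lker (eps lam : R) (x y : R) : R :=
  - lam / eps * x * J1q (lam * (x ^ 2 - y ^ 2) / eps).

Definition p1 (eps lam q : R) (x : R) : R :=
  eps * Derive (fun y => Pker eps lam q x y) 0.
Definition p10 (eps lam : R) : R := - lam / (2 * eps).

Definition rr (eps lam q : R) : R := q - lam / (2 * eps).

Definition kfun (eps lam q : R) (y : R) : R :=
  rr eps lam q * Kker eps lam 1 y + Derive (fun x => Kker eps lam x y) 1.

Definition Dx (f : R -> R -> R) (x t : R) : R := Derive (fun z => f z t) x.
Definition Dt (f : R -> R -> R) (x t : R) : R := Derive (fun s => f x s) t.

Definition cont_rect (f : R -> R -> R) (a b : R) : Prop :=
  forall x t, 0 <= x <= 1 -> a < t < b ->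
  forall e : R, 0 < e -> exists del : R, 0 < del /\
    forall x' t', 0 <= x' <= 1 -> a < t' < b ->
      Rabs (x' - x) < del -> Rabs (t' - t) < del ->
      Rabs (f x' t' - f x t) < e.

Definition Uin (eps lam q : R) (uh : R -> R -> R) (tj : nat -> R) (j : nat) : R :=
  RInt (fun y => kfun eps lam q y * uh y (tj j)) 0 1.

Definition classical_on (f : R -> R -> R) (a b : R) : Prop :=
  (forall x t, 0 <= x <= 1 -> a < t < b ->
     ex_derive (fun s => f x s) t /\
     ex_derive (fun z => f z t) x /\
     ex_derive (fun z => Dx f z t) x) /\
  cont_rect f a b /\ cont_rect (Dx f) a b /\
  cont_rect (Dx (Dx f)) a b /\ cont_rect (Dt f) a b.

Definition closed_loop (eps lam q : R) (u uh : R -> R -> R) (tj : nat -> R) : Prop :=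
  forall j : nat,
    classical_on u (tj j) (tj (S j)) /\
    classical_on uh (tj j) (tj (S j)) /\
    forall t, tj j < t < tj (S j) ->
      (forall x, 0 <= x <= 1 ->
         Dt u x t = eps * Dx (Dx u) x t + lam * u x t) /\
      Dx u 0 t = 0 /\
      Dx u 1 t + q * u 1 t = Uin eps lam q uh tj j /\
      (forall x, 0 <= x <= 1 ->
         Dt uh x t = eps * Dx (Dx uh) x t + lam * uh x t
                     + p1 eps lam q x * (u 0 t - uh 0 t)) /\
      Dx uh 0 t = p10 eps lam * (u 0 t - uh 0 t) /\
      Dx uh 1 t + q * uh 1 t = Uin eps lam q uh tj j.

Definition utilde (u uh : R -> R -> R) (x t : R) : R := u x t - uh x t.
Definition wtilde (eps lam q : R) (u uh : R -> R -> R) (x t : R) : R :=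
  utilde u uh x t + RInt (fun y => Qker eps lam q x y * utilde u uh y t) 0 x.
Definition what (eps lam : R) (uh : R -> R -> R) (x t : R) : R :=
  uh x t - RInt (fun y => Kker eps lam x y * uh y t) 0 x.

Definition dhold (eps lam q : R) (uh : R -> R -> R) (tj : nat -> R) (j : nat) (t : R) : R :=
  RInt (fun y => kfun eps lam q y * (uh y (tj j) - uh y t)) 0 1.

Definition rho1 (eps lam q : R) : R := 6 * eps ^ 2 * (kfun eps lam q 1) ^ 2.

Definition alpha1 (eps lam q : R) : R :=
  let k := kfun eps lam q in
  3 * (1 + sqrt (RInt (fun x => RInt (fun y => (Lker eps lam x y) ^ 2) 0 x) 0 1)) ^ 2
    * RInt (fun y => (eps * Derive (Derive k) y + eps * k 1 * k y + lam * k y) ^ 2) 0 1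
  + 6 * (eps * q * k 1 + eps * Derive k 1) ^ 2
    * RInt (fun y => (Lker eps lam 1 y) ^ 2) 0 1.

Definition alpha2 (eps lam q : R) : R :=
  let k := kfun eps lam q in 6 * (eps * q * k 1 + eps * Derive k 1) ^ 2.

Definition alpha3 (eps lam q : R) : R :=
  let k := kfun eps lam q in
  6 * (lam * k 0 / 2 + RInt (fun y => k y * p1 eps lam q y) 0 1) ^ 2.

(* Main.v *)
Require Import Defs.
From Stdlib Require Import Reals Lra Psatz FunctionalExtensionality PropExtensionality Classical Factorial Arith.
From Coquelicot Require Import Coquelicot.
Open Scope R_scope.

Definition gcont (f : R -> R) := forall x, continuity_pt f x.
Definition g2cont (f : R -> R -> R) := forall x y, continuity_2d_pt f x y.

Lemma gcont_continuous f : gcont f -> forall x, continuous f x.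
Proof. intros H x; apply continuity_pt_filterlim, H. Qed.
Lemma ex_RInt_gcont f a b : gcont f -> ex_RInt f a b.
Proof. intros H; apply (ex_RInt_continuous (V:=R_CompleteNormedModule)); intros; apply gcont_continuous, H. Qed.

Lemma gcont_plus f g : gcont f -> gcont g -> gcont (fun x => f x + g x).
Proof. intros H1 H2 x; apply (continuity_pt_plus f g); auto. Qed.
Lemma gcont_minus f g : gcont f -> gcont g -> gcont (fun x => f x - g x).
Proof. intros H1 H2 x; apply (continuity_pt_minus f g); auto. Qed.
Lemma gcont_mult f g : gcont f -> gcont g -> gcont (fun x => f x * g x).
Proof. intros H1 H2 x; apply (continuity_pt_mult f g); auto. Qed.
Lemma gcont_opp f : gcont f -> gcont (fun x => - f x).
Proof. intros H1 x; apply (continuity_pt_opp f); auto. Qed.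
Lemma gcont_const c : gcont (fun _ => c).
Proof. intros x; apply continuity_pt_const; intros ? ?; auto. Qed.
Lemma gcont_id : gcont (fun x => x).
Proof. intros x; apply continuity_pt_id. Qed.
Lemma gcont_comp f g : gcont f -> gcont g -> gcont (fun x => g (f x)).
Proof. intros H1 H2 x; apply (continuity_pt_comp f g); auto. Qed.
Lemma gcont_pow f n : gcont f -> gcont (fun x => f x ^ n).
Proof. intros H. apply (gcont_comp f (fun y => y ^ n)); auto.
  intros y; apply derivable_continuous_pt, derivable_pt_pow. Qed.

Lemma g2cont_plus f g : g2cont f -> g2cont g -> g2cont (fun x y => f x y + g x y).
Proof. intros H1 H2 x y; apply continuity_2d_pt_plus; auto. Qed.
Lemma g2cont_minus f g : g2cont f -> g2cont g -> g2cont (fun x y => f x y - g x y).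
Proof. intros H1 H2 x y; apply continuity_2d_pt_minus; auto. Qed.
Lemma g2cont_mult f g : g2cont f -> g2cont g -> g2cont (fun x y => f x y * g x y).
Proof. intros H1 H2 x y; apply continuity_2d_pt_mult; auto. Qed.
Lemma g2cont_opp f : g2cont f -> g2cont (fun x y => - f x y).
Proof. intros H1 x y; apply continuity_2d_pt_opp; auto. Qed.
Lemma g2cont_const c : g2cont (fun _ _ => c).
Proof. intros x y; apply continuity_2d_pt_const. Qed.
Lemma g2cont_1 f : gcont f -> g2cont (fun x _ => f x).
Proof. intros H x y. apply (continuity_1d_2d_pt_comp f (fun u _ => u)); auto.
  apply continuity_2d_pt_id1. Qed.
Lemma g2cont_2 f : gcont f -> g2cont (fun _ y => f y).
Proof. intros H x y. apply (continuity_1d_2d_pt_comp f (fun _ v => v)); auto.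
  apply continuity_2d_pt_id2. Qed.
Lemma g2cont_comp f g : g2cont f -> gcont g -> g2cont (fun x y => g (f x y)).
Proof. intros H1 H2 x y. apply continuity_1d_2d_pt_comp; auto. Qed.

Lemma g2cont_sect f x : g2cont f -> gcont (f x).
Proof.
  intros H y e He. destruct (H x y (mkposreal e He)) as [d Hd].
  exists d; split. apply cond_pos.
  intros z [_ Hz]. simpl in *. unfold R_dist in *. apply Hd.
  rewrite Rminus_eq_0, Rabs_R0; apply cond_pos. exact Hz.
Qed.
Lemma g2cont_sect1 f y : g2cont f -> gcont (fun x => f x y).
Proof.
  intros H x e He. destruct (H x y (mkposreal e He)) as [d Hd].
  exists d; split. apply cond_pos.
  intros z [_ Hz]. simpl in *. unfold R_dist in *. apply Hd. exact Hz.
  rewrite Rminus_eq_0, Rabs_R0; apply cond_pos.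
Qed.

Lemma leibniz (f df : R -> R -> R) (a b da db : R -> R) x :
  (forall u v, is_derive (fun z => f z v) u (df u v)) ->
  g2cont df ->
  (forall u, gcont (f u)) ->
  is_derive a x (da x) -> is_derive b x (db x) ->
  is_derive (fun z => RInt (f z) (a z) (b z)) x
    (RInt (df x) (a x) (b x) - f x (a x) * da x + f x (b x) * db x).
Proof.
  intros Hd Hc Hf Ha Hb.
  assert (HD : forall u v, Derive (fun z => f z v) u = df u v).
  { intros; apply is_derive_unique, Hd. }
  assert (HC : forall u v, continuity_2d_pt (fun u v => Derive (fun z => f z v) u) u v).
  { intros u v; apply continuity_2d_pt_ext with (f := df). intros; rewrite HD; auto. apply Hc. }
  assert (HR : forall y a b, ex_RInt (fun t => f y t) a b).
  { intros; apply ex_RInt_gcont, Hf. }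
  assert (E : RInt (df x) (a x) (b x) - f x (a x) * da x + f x (b x) * db x =
    RInt (fun t => Derive (fun u => f u t) x) (a x) (b x) + - f x (a x) * da x + f x (b x) * db x).
  { assert (E2 : RInt (df x) (a x) (b x) = RInt (fun t => Derive (fun u => f u t) x) (a x) (b x))
      by (apply RInt_ext; intros; rewrite HD; auto).
    rewrite E2; ring. }
  rewrite E.
  apply (is_derive_RInt_param_bound_comp f a b x (da x) (db x)).
  - apply filter_forall; intros; apply HR.
  - exists (mkposreal 1 Rlt_0_1). apply filter_forall; intros; apply HR.
  - exists (mkposreal 1 Rlt_0_1). apply filter_forall; intros; apply HR.
  - exact Ha.
  - exact Hb.
  - exists (mkposreal 1 Rlt_0_1). apply filter_forall; intros; eexists; apply Hd.
  - intros; apply HC.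
  - exists (mkposreal 1 Rlt_0_1); intros; apply HC.
  - exists (mkposreal 1 Rlt_0_1); intros; apply HC.
  - apply Hf.
  - apply Hf.
Qed.

Lemma isd_plus (f g : R -> R) (x df dg : R) : is_derive f x df -> is_derive g x dg ->
  is_derive (fun y => f y + g y) x (df + dg).
Proof. intros; exact (is_derive_plus f g x df dg H H0). Qed.
Lemma isd_minus (f g : R -> R) (x df dg : R) : is_derive f x df -> is_derive g x dg ->
  is_derive (fun y => f y - g y) x (df - dg).
Proof. intros; exact (is_derive_minus f g x df dg H H0). Qed.
Lemma isd_mult (f g : R -> R) (x df dg : R) : is_derive f x df -> is_derive g x dg ->
  is_derive (fun y => f y * g y) x (df * g x + f x * dg).
Proof. intros; exact (is_derive_mult f g x df dg H H0 Rmult_comm). Qed.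
Lemma isd_comp (f g : R -> R) (x df dg : R) : is_derive f (g x) df -> is_derive g x dg ->
  is_derive (fun y => f (g y)) x (dg * df).
Proof. intros; exact (is_derive_comp f g x df dg H H0). Qed.
Lemma isd_const (c x : R) : is_derive (fun _ => c) x 0.
Proof. exact (is_derive_const c x). Qed.
Lemma isd_id (x : R) : is_derive (fun y => y) x 1.
Proof. exact (is_derive_id x). Qed.
Lemma isd_scal (f : R -> R) (x k df : R) : is_derive f x df -> is_derive (fun y => k * f y) x (k * df).
Proof. apply is_derive_scal. Qed.
Lemma isd_eq (f : R -> R) (x l l' : R) : is_derive f x l -> l = l' -> is_derive f x l'.
Proof. intros H ->; exact H. Qed.
Lemma isd_ext (f g : R -> R) (x l : R) : (forall y, f y = g y) -> is_derive f x l -> is_derive g x l.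
Proof. apply is_derive_ext. Qed.
Lemma isd_pow (f : R -> R) (x : R) n (df : R) : is_derive f x df -> is_derive (fun y => f y ^ n) x (INR n * f x ^ (pred n) * df).
Proof. intros H. apply (isd_eq _ _ (df * (INR n * f x ^ pred n))). 2: ring.
  apply (isd_comp (fun y => y ^ n) f x); auto.
  apply is_derive_Reals, derivable_pt_lim_pow. Qed.

Lemma gcont_of_der (f df : R -> R) : (forall x, is_derive f x (df x)) -> gcont f.
Proof. intros H x. apply continuity_pt_filterlim. apply (ex_derive_continuous (V:=R_NormedModule)). eexists; apply H. Qed.

Lemma RInt_plus' (f g : R -> R) (a b : R) : ex_RInt f a b -> ex_RInt g a b ->
  RInt (fun x => f x + g x) a b = RInt f a b + RInt g a b.
Proof. intros; exact (RInt_plus f g a b H H0). Qed.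
Lemma RInt_minus' (f g : R -> R) (a b : R) : ex_RInt f a b -> ex_RInt g a b ->
  RInt (fun x => f x - g x) a b = RInt f a b - RInt g a b.
Proof. intros; exact (RInt_minus f g a b H H0). Qed.
Lemma RInt_scal' (f : R -> R) (a b k : R) : ex_RInt f a b -> RInt (fun x => k * f x) a b = k * RInt f a b.
Proof. intros; exact (RInt_scal f a b k H). Qed.
Lemma RInt_scal_r (f : R -> R) (a b k : R) : ex_RInt f a b -> RInt (fun x => f x * k) a b = RInt f a b * k.
Proof. intros. rewrite Rmult_comm, <- RInt_scal'; auto. apply RInt_ext; intros; apply Rmult_comm. Qed.
Lemma RInt_opp' (f : R -> R) (a b : R) : ex_RInt f a b -> RInt (fun x => - f x) a b = - RInt f a b.
Proof. intros; exact (RInt_opp f a b H). Qed.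
Lemma RInt_swap' (f : R -> R) (a b : R) : ex_RInt f a b -> RInt f b a = - RInt f a b.
Proof. intros; symmetry; exact (opp_RInt_swap f a b H). Qed.
Lemma RInt_point' (f : R -> R) (a : R) : RInt f a a = 0.
Proof. exact (RInt_point a f). Qed.
Lemma RInt_const' (c a b : R) : RInt (fun _ => c) a b = (b - a) * c.
Proof. exact (RInt_const a b c). Qed.
Lemma RInt_Chasles' (f : R -> R) (a b c : R) : ex_RInt f a b -> ex_RInt f b c -> RInt f a b + RInt f b c = RInt f a c.
Proof. intros; exact (RInt_Chasles f a b c H H0). Qed.

Lemma isd_RInt (f : R -> R) (a x : R) : gcont f -> is_derive (fun z => RInt f a z) x (f x).
Proof.
  intros H. apply (is_derive_RInt f (fun z => RInt f a z) a x).
  - apply filter_forall; intros. apply (RInt_correct (V:=R_CompleteNormedModule)). apply ex_RInt_gcont, H.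
  - apply gcont_continuous, H.
Qed.

Lemma zero_der (H : R -> R) (z : R) : (forall x, is_derive H x 0) -> H z = H 0.
Proof.
  intros Hd.
  destruct (MVT_gen H 0 z (fun _ => 0)) as [c [_ Hc]].
  - intros; apply Hd.
  - intros; apply continuity_pt_filterlim, (ex_derive_continuous (V:=R_NormedModule)); eexists; apply Hd.
  - lra.
Qed.

Lemma RInt_ext' (f g : R -> R) (a b : R) :
  (forall x, Rmin a b < x < Rmax a b -> f x = g x) -> RInt f a b = RInt g a b.
Proof. apply RInt_ext. Qed.
Lemma ex_RInt_ext' (f g : R -> R) (a b : R) :
  (forall x, Rmin a b < x < Rmax a b -> f x = g x) -> ex_RInt f a b -> ex_RInt g a b.
Proof. apply ex_RInt_ext. Qed.

Definition aI (m : nat) : R := / (2 ^ (2 * m + 1) * INR (fact m) * INR (fact (m + 1))).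
Definition aJ (m : nat) : R := (-1) ^ m * aI m.

Lemma I1q_PS s : I1q s = PSeries aI s.
Proof. unfold I1q, PSeries, aI. apply Series_ext; intros; unfold Rdiv; ring. Qed.
Lemma J1q_PS s : J1q s = PSeries aJ s.
Proof. unfold J1q, PSeries, aJ, aI. apply Series_ext; intros n.
  replace (-s) with (-1*s) by ring; rewrite Rpow_mult_distr; unfold Rdiv; ring. Qed.

Lemma fact_pos' n : 0 < INR (fact n).
Proof. apply lt_0_INR, lt_O_fact. Qed.

Lemma aI_pos n : 0 < aI n.
Proof. unfold aI. apply Rinv_0_lt_compat. repeat apply Rmult_lt_0_compat;
  try apply fact_pos'. apply pow_lt; lra. Qed.

Lemma aI_S n : aI (S n) = aI n / (4 * INR (S n) * INR (S (S n))).
Proof.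
  unfold aI.
  replace (2 * S n + 1)%nat with (S (S (2 * n + 1))) by lia.
  replace (S n + 1)%nat with (S (n + 1)) by lia.
  rewrite !fact_simpl, !mult_INR. simpl pow.
  replace (n+1)%nat with (S n) by lia.
  rewrite fact_simpl, mult_INR.
  pose proof (fact_pos' n). pose proof (pos_INR n).
  assert (0 < 2 ^ (2 * n + 1)) by (apply pow_lt; lra).
  rewrite !S_INR. field. repeat split; try lra. apply pow_nonzero; lra.
Qed.

Lemma aJ_S n : aJ (S n) = - aJ n / (4 * INR (S n) * INR (S (S n))).
Proof. unfold aJ. rewrite aI_S. simpl pow. unfold Rdiv. ring. Qed.

Lemma lim_invS : is_lim_seq (fun n => / INR (S n)) 0.
Proof.
  apply (is_lim_seq_incr_1 (fun n => / INR n)).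
  replace (Finite 0) with (Rbar_inv p_infty) by reflexivity.
  apply is_lim_seq_inv. apply is_lim_seq_INR. discriminate.
Qed.

Lemma ratio_lim : is_lim_seq (fun n => / (4 * INR (S n) * INR (S (S n)))) 0.
Proof.
  apply is_lim_seq_le_le with (u := fun _ => 0) (w := fun n => / INR (S n)).
  - intros n. pose proof (pos_INR n). rewrite !S_INR. split.
    + apply Rlt_le, Rinv_0_lt_compat. nra.
    + apply Rinv_le_contravar. lra. nra.
  - apply is_lim_seq_const.
  - apply lim_invS.
Qed.

Definition entire (a : nat -> R) := CV_radius a = p_infty.

Lemma entire_aI : entire aI.
Proof.
  apply CV_radius_infinite_DAlembert.
  - intros n; pose proof (aI_pos n); lra.
  - apply is_lim_seq_ext with (u := fun n => / (4 * INR (S n) * INR (S (S n)))).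
    2: apply ratio_lim.
    intros n. rewrite aI_S. pose proof (aI_pos n). pose proof (pos_INR n).
    rewrite !S_INR.
    replace (aI n / (4 * (INR n + 1) * (INR n + 1 + 1)) / aI n)
      with (/ (4 * (INR n + 1) * (INR n + 1 + 1))) by (field; repeat split; lra).
    rewrite Rabs_pos_eq. auto.
    apply Rlt_le, Rinv_0_lt_compat; nra.
Qed.

Lemma entire_aJ : entire aJ.
Proof.
  apply CV_radius_infinite_DAlembert.
  - intros n; unfold aJ; pose proof (aI_pos n).
    apply Rmult_integral_contrapositive; split; [apply pow_nonzero|]; lra.
  - apply is_lim_seq_ext with (u := fun n => / (4 * INR (S n) * INR (S (S n)))).
    2: apply ratio_lim.
    intros n. rewrite aJ_S. pose proof (pos_INR n).
    assert (aJ n <> 0) by (unfold aJ; pose proof (aI_pos n);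
      apply Rmult_integral_contrapositive; split; [apply pow_nonzero|]; lra).
    rewrite !S_INR.
    replace (- aJ n / (4 * (INR n + 1) * (INR n + 1 + 1)) / aJ n)
      with (- / (4 * (INR n + 1) * (INR n + 1 + 1))) by (field; repeat split; lra).
    rewrite Rabs_Ropp, Rabs_pos_eq. auto.
    apply Rlt_le, Rinv_0_lt_compat; nra.
Qed.

Lemma entire_lt a x : entire a -> Rbar_lt (Rabs x) (CV_radius a).
Proof. intros H; rewrite H; simpl; auto. Qed.

Lemma entire_derive a : entire a -> entire (PS_derive a).
Proof. unfold entire; intros; rewrite CV_radius_derive; auto. Qed.
Lemma entire_Int a : entire a -> entire (PS_Int a).
Proof. unfold entire; intros; rewrite CV_radius_Int; auto. Qed.

Lemma PS_gcont a : entire a -> gcont (PSeries a).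
Proof. intros H x; apply PSeries_continuity, entire_lt, H. Qed.
Lemma PS_der a x : entire a -> is_derive (PSeries a) x (PSeries (PS_derive a) x).
Proof. intros H; apply is_derive_PSeries, entire_lt, H. Qed.
Lemma PS_RInt a x : entire a -> RInt (PSeries a) 0 x = PSeries (PS_Int a) x.
Proof. intros H; apply is_RInt_unique, is_RInt_PSeries, entire_lt, H. Qed.

Lemma is_series_zero' : is_series (fun _ : nat => 0) 0.
Proof.
  apply is_series_ext with (a := fun n => (/2)^n * 0).
  2: { assert (Hg : Rabs (/2) < 1) by (rewrite Rabs_pos_eq; lra).
  pose proof (is_series_scal_r 0 _ _ (is_series_geom _ Hg)) as HH.
  rewrite Rmult_0_r in HH. exact HH. }
  intros; apply Rmult_0_r.
Qed.

Lemma is_series_eq (a : nat -> R) (l l' : R) : is_series a l -> l = l' -> is_series a l'.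
Proof. intros H ->; exact H. Qed.

Lemma PSeries_lin (b : nat -> R) x :
  b 0%nat = 0 -> (forall n, b (S (S n)) = 0) -> PSeries b x = b 1%nat * x.
Proof.
  intros H0 H2. apply is_series_unique.
  apply is_series_decr_1. apply is_series_decr_1.
  apply (is_series_eq _ 0). 2: (unfold plus, opp; simpl; rewrite H0; ring).
  apply is_series_ext with (a := fun _ => 0).
  2: apply is_series_zero'.
  intros n. simpl. rewrite H2. symmetry; apply Rmult_0_l.
Qed.

Lemma I_inteq x : x * PSeries aI x = x / 2 + / 4 * PSeries (PS_Int (PS_Int aI)) x.
Proof.
  rewrite <- PSeries_incr_1.
  assert (E1 : ex_pseries (PS_incr_1 aI) x).
  { apply ex_pseries_incr_1, CV_radius_inside, entire_lt, entire_aI. }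
  assert (E2 : ex_pseries (PS_scal (/4) (PS_Int (PS_Int aI))) x).
  { apply ex_pseries_scal. apply Rmult_comm. apply CV_radius_inside, entire_lt, entire_Int, entire_Int, entire_aI. }
  rewrite <- (PSeries_scal (/4)).
  assert (PSeries (PS_incr_1 aI) x - PSeries (PS_scal (/ 4) (PS_Int (PS_Int aI))) x = x / 2).
  { rewrite <- PSeries_minus; auto. rewrite PSeries_lin.
    - unfold PS_minus, PS_incr_1, PS_scal, PS_Int, plus, opp, scal, zero, mult; cbn -[INR aI aJ pow].
      unfold aI; simpl. field.
    - unfold PS_minus, PS_incr_1, PS_scal, PS_Int, plus, opp, scal, zero, mult; cbn -[INR aI aJ pow]. ring.
    - intros n. unfold PS_minus, PS_incr_1, PS_scal, PS_Int, plus, opp, scal, zero, mult; cbn -[INR aI aJ pow].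
      rewrite aI_S. pose proof (pos_INR n). rewrite !S_INR. field. lra. }
  lra.
Qed.

Lemma J_inteq x : x * PSeries aJ x = x / 2 - / 4 * PSeries (PS_Int (PS_Int aJ)) x.
Proof.
  rewrite <- PSeries_incr_1.
  assert (E1 : ex_pseries (PS_incr_1 aJ) x).
  { apply ex_pseries_incr_1, CV_radius_inside, entire_lt, entire_aJ. }
  assert (E2 : ex_pseries (PS_scal (-/4) (PS_Int (PS_Int aJ))) x).
  { apply ex_pseries_scal. apply Rmult_comm. apply CV_radius_inside, entire_lt, entire_Int, entire_Int, entire_aJ. }
  replace (x / 2 - / 4 * PSeries (PS_Int (PS_Int aJ)) x) with (x/2 + (-/4) * PSeries (PS_Int (PS_Int aJ)) x) by ring.
  rewrite <- (PSeries_scal (-/4)).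
  assert (PSeries (PS_incr_1 aJ) x - PSeries (PS_scal (- / 4) (PS_Int (PS_Int aJ))) x = x / 2).
  { rewrite <- PSeries_minus; auto. rewrite PSeries_lin.
    - unfold PS_minus, PS_incr_1, PS_scal, PS_Int, plus, opp, scal, zero, mult; cbn -[INR aI aJ pow].
      unfold aJ, aI; simpl. field.
    - unfold PS_minus, PS_incr_1, PS_scal, PS_Int, plus, opp, scal, zero, mult; cbn -[INR aI aJ pow]. ring.
    - intros n. unfold PS_minus, PS_incr_1, PS_scal, PS_Int, plus, opp, scal, zero, mult; cbn -[INR aI aJ pow].
      rewrite aJ_S. pose proof (pos_INR n). rewrite !S_INR. field. lra. }
  lra.
Qed.

Definition conv (f g : R -> R) (z : R) : R := RInt (fun w => f (z - w) * g w) 0 z.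
Definition Aop (f : R -> R) (z : R) : R := RInt f 0 z.
Definition C1 (f df : R -> R) := (forall x, is_derive f x (df x)) /\ gcont df.

Lemma C1_gcont f df : C1 f df -> gcont f.
Proof. intros [H _]; apply (gcont_of_der f df H). Qed.

Lemma Aop_C1 f : gcont f -> C1 (Aop f) f.
Proof. intros H; split; auto. intros x; apply isd_RInt, H. Qed.

Lemma Aop_0 f : Aop f 0 = 0.
Proof. apply RInt_point'. Qed.

Lemma conv_integrand_gcont f g z : gcont f -> gcont g -> gcont (fun w => f (z - w) * g w).
Proof. intros Hf Hg. apply gcont_mult; auto.
  apply (gcont_comp (fun w => z - w) f); auto. apply gcont_minus; [apply gcont_const|apply gcont_id]. Qed.

Lemma isd_shift (f df : R -> R) v c u : (forall x, is_derive f x (df x)) ->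
  is_derive (fun y => f (y - v) * c) u (df (u - v) * c).
Proof.
  intros Hd. apply (isd_eq _ _ ((1 * df (u - v)) * c + f (u - v) * 0)). 2: ring.
  apply (isd_mult (fun y => f (y - v)) (fun _ => c)). 2: apply isd_const.
  apply (isd_comp f (fun y => y - v)). apply Hd.
  apply (isd_eq _ _ (1 - 0)). 2: ring. apply isd_minus. apply isd_id. apply isd_const.
Qed.

Lemma g2cont_shift (f g : R -> R) : gcont f -> gcont g -> g2cont (fun z w => f (z - w) * g w).
Proof.
  intros Hf Hg. apply g2cont_mult. 2: apply g2cont_2, Hg.
  apply g2cont_comp; auto. apply g2cont_minus.
  apply g2cont_1, gcont_id. apply g2cont_2, gcont_id.
Qed.

Lemma conv_der f df g z : C1 f df -> gcont g ->
  is_derive (conv f g) z (f 0 * g z + conv df g z).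
Proof.
  intros [Hd Hc] Hg.
  unfold conv.
  apply (isd_eq _ _ (RInt (fun w => df (z - w) * g w) 0 z - f (z - 0) * g 0 * 0 + f (z - z) * g z * 1)).
  2: { rewrite Rminus_eq_0. ring. }
  apply (leibniz (fun z w => f (z - w) * g w) (fun z w => df (z - w) * g w)
    (fun _ => 0) (fun z => z) (fun _ => 0) (fun _ => 1) z).
  - intros u v. apply isd_shift; auto.
  - apply g2cont_shift; auto.
  - intros u. apply conv_integrand_gcont; auto. apply (gcont_of_der f df Hd).
  - apply isd_const.
  - apply isd_id.
Qed.

Lemma conv_comm f g z : gcont f -> gcont g -> conv f g z = conv g f z.
Proof.
  intros Hf Hg. unfold conv.
  assert (H := RInt_comp_lin (fun w => f (z - w) * g w) (-1) z 0 z).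
  replace (-1 * 0 + z) with z in H by ring.
  replace (-1 * z + z) with 0 in H by ring.
  rewrite (RInt_swap' (fun w => f (z - w) * g w) 0 z) in H. 2: apply ex_RInt_gcont, conv_integrand_gcont; auto.
  assert (E : RInt (fun y => scal (-1) (f (z - (-1 * y + z)) * g (-1 * y + z))) 0 z
    = - RInt (fun w => g (z - w) * f w) 0 z).
  { rewrite <- RInt_opp'. apply RInt_ext'. intros; unfold scal; simpl; unfold mult; simpl.
    replace (z - (-1 * x + z)) with x by ring. replace (-1 * x + z) with (z - x) by ring. ring.
    apply ex_RInt_gcont, conv_integrand_gcont; auto. }
  assert (H2 : - RInt (fun w => g (z - w) * f w) 0 z = - RInt (fun w => f (z - w) * g w) 0 z).
  { rewrite <- E. apply H. apply ex_RInt_gcont, conv_integrand_gcont; auto. }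
  lra.
Qed.

Lemma conv_gcont f g dg : gcont f -> C1 g dg -> gcont (conv f g).
Proof.
  intros Hf Hg. assert (E : conv f g = conv g f).
  { apply functional_extensionality; intros; apply conv_comm; auto. apply (C1_gcont _ _ Hg). }
  rewrite E. apply (gcont_of_der _ (fun z => g 0 * f z + conv dg f z)).
  intros; apply conv_der; auto.
Qed.

Lemma A_conv f g dg z : gcont f -> C1 g dg -> conv (Aop f) g z = Aop (conv f g) z.
Proof.
  intros Hf Hg.
  assert (Hgc := C1_gcont _ _ Hg).
  assert (H0 : forall x, is_derive (fun z => conv (Aop f) g z - Aop (conv f g) z) x 0).
  { intros x. apply (isd_eq _ _ ((Aop f 0 * g x + conv f g x) - conv f g x)).
    2: rewrite Aop_0; ring.
    apply isd_minus.
    - apply conv_der; auto. apply Aop_C1; auto.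
    - apply isd_RInt. apply (conv_gcont _ _ dg); auto. }
  pose proof (zero_der _ z H0) as E. unfold conv, Aop in E |- *.
  rewrite !RInt_point' in E. lra.
Qed.

Lemma Aop_ext f g z : (forall x, f x = g x) -> Aop f z = Aop g z.
Proof. intros H; unfold Aop; apply RInt_ext'; intros; auto. Qed.

Lemma Aop_gcont f : gcont f -> gcont (Aop f).
Proof. intros H; apply (C1_gcont _ _ (Aop_C1 f H)). Qed.

Lemma conv_id g dg z : C1 g dg -> conv (fun w => w) g z = Aop (Aop g) z.
Proof.
  intros Hg.
  assert (E : (fun w : R => w) = Aop (fun _ => 1)).
  { apply functional_extensionality; intros w; unfold Aop; rewrite RInt_const'; ring. }
  rewrite E. rewrite (A_conv _ _ dg); auto. 2: apply gcont_const.
  apply Aop_ext. intros y; unfold conv, Aop. apply RInt_ext'; intros; ring.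
Qed.

Definition Ifun := PSeries aI.
Definition Jfun := PSeries aJ.

Lemma I_C1 : C1 Ifun (PSeries (PS_derive aI)).
Proof. split. intros; apply PS_der, entire_aI. apply PS_gcont, entire_derive, entire_aI. Qed.
Lemma J_C1 : C1 Jfun (PSeries (PS_derive aJ)).
Proof. split. intros; apply PS_der, entire_aJ. apply PS_gcont, entire_derive, entire_aJ. Qed.
Lemma I_gcont : gcont Ifun. Proof. apply (C1_gcont _ _ I_C1). Qed.
Lemma J_gcont : gcont Jfun. Proof. apply (C1_gcont _ _ J_C1). Qed.

Lemma AA_PS a w : entire a -> Aop (Aop (PSeries a)) w = PSeries (PS_Int (PS_Int a)) w.
Proof.
  intros H. unfold Aop at 1. rewrite <- PS_RInt. 2: apply entire_Int, H.
  apply RInt_ext'; intros. unfold Aop; apply PS_RInt, H.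
Qed.

Ltac gc := repeat first [assumption | apply conv_integrand_gcont | apply gcont_mult | apply gcont_const | apply gcont_id
  | apply gcont_minus | apply gcont_plus | apply gcont_opp].

Lemma convJI z : conv Jfun Ifun z = 2 * (Ifun z - Jfun z).
Proof.
  set (AI := Aop (Aop Ifun)). set (AJ := Aop (Aop Jfun)).
  assert (hI : forall w, w * Ifun w = w / 2 + / 4 * AI w).
  { intros w; unfold AI, Ifun; rewrite AA_PS. apply I_inteq. apply entire_aI. }
  assert (hJ : forall w, w * Jfun w = w / 2 - / 4 * AJ w).
  { intros w; unfold AJ, Jfun; rewrite AA_PS. apply J_inteq. apply entire_aJ. }
  assert (gI := I_gcont). assert (gJ := J_gcont).
  assert (gAI : gcont AI) by (apply Aop_gcont, Aop_gcont, gI).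
  assert (gAJ : gcont AJ) by (apply Aop_gcont, Aop_gcont, gJ).
  assert (gid : gcont (fun w => w)) by apply gcont_id.
  assert (S1 : z * conv Jfun Ifun z = conv (fun w => w * Jfun w) Ifun z + conv Jfun (fun w => w * Ifun w) z).
  { unfold conv. rewrite <- RInt_scal'. 2: apply ex_RInt_gcont, conv_integrand_gcont; auto.
    rewrite <- RInt_plus'.
    apply RInt_ext'; intros; ring.
    apply ex_RInt_gcont, (conv_integrand_gcont (fun w => w * Jfun w)); auto. apply gcont_mult; auto.
    apply ex_RInt_gcont, (conv_integrand_gcont Jfun (fun w => w * Ifun w)); auto. apply gcont_mult; auto. }
  assert (S2 : conv (fun w => w * Jfun w) Ifun z = / 2 * conv (fun w => w) Ifun z - / 4 * conv AJ Ifun z).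
  { unfold conv. rewrite <- !RInt_scal', <- RInt_minus'.
    apply RInt_ext'; intros. rewrite hJ. field.
    all: apply ex_RInt_gcont; gc. }
  assert (S3 : conv Jfun (fun w => w * Ifun w) z = / 2 * conv Jfun (fun w => w) z + / 4 * conv Jfun AI z).
  { unfold conv. rewrite <- !RInt_scal', <- RInt_plus'.
    apply RInt_ext'; intros. rewrite hI. field.
    all: apply ex_RInt_gcont; gc. }
  assert (S4 : conv (fun w => w) Ifun z = AI z) by (apply (conv_id _ _ z I_C1)).
  assert (S5 : conv Jfun (fun w => w) z = AJ z).
  { rewrite conv_comm; auto. apply (conv_id _ _ z J_C1). }
  assert (S6 : conv AJ Ifun z = Aop (Aop (conv Jfun Ifun)) z).
  { unfold AJ. rewrite (A_conv _ _ _ z (Aop_gcont _ gJ) I_C1).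
    apply Aop_ext; intros; apply (A_conv _ _ _ _ gJ I_C1). }
  assert (S7 : conv Jfun AI z = Aop (Aop (conv Jfun Ifun)) z).
  { rewrite conv_comm; auto. unfold AI.
    rewrite (A_conv _ _ _ z (Aop_gcont _ gI) J_C1).
    apply Aop_ext; intros. rewrite (A_conv _ _ _ _ gI J_C1).
    apply Aop_ext; intros. apply conv_comm; auto. }
  destruct (Req_dec z 0) as [Hz|Hz].
  - subst z. unfold conv; rewrite RInt_point'. unfold Ifun, Jfun; rewrite !PSeries_0.
    unfold aJ; simpl; ring.
  - apply (Rmult_eq_reg_l z); auto.
    rewrite S1, S2, S3, S4, S5, S6, S7.
    replace (z * (2 * (Ifun z - Jfun z))) with (2 * (z * Ifun z) - 2 * (z * Jfun z)) by ring.
    rewrite hI, hJ. field.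
Qed.

Definition Qf (eps lam : R) (u v : R) : R := lam * (u ^ 2 - v ^ 2) / eps.
Definition Kg (eps lam : R) (phi : R -> R) (x y : R) : R := - lam / eps * x * phi (Qf eps lam x y).
Definition dK1 (eps lam : R) (phi dphi : R -> R) (u v : R) : R :=
  - lam / eps * phi (Qf eps lam u v) + - lam / eps * u * (lam * (2 * u) / eps * dphi (Qf eps lam u v)).
Definition dK2 (eps lam : R) (phi dphi : R -> R) (u v : R) : R :=
  - lam / eps * u * (lam * (- (2 * v)) / eps * dphi (Qf eps lam u v)).

Lemma Kker_eq eps lam x y : Kker eps lam x y = Kg eps lam Ifun x y.
Proof. unfold Kker, Kg, Qf, Ifun. rewrite I1q_PS. reflexivity. Qed.
Lemma Lker_eq eps lam x y : Lker eps lam x y = Kg eps lam Jfun x y.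
Proof. unfold Lker, Kg, Qf, Jfun. rewrite J1q_PS. reflexivity. Qed.

Lemma Qf_d1 eps lam u v : eps <> 0 -> is_derive (fun z => Qf eps lam z v) u (lam * (2 * u) / eps).
Proof.
  intros He. unfold Qf.
  apply (isd_eq _ _ (/ eps * (lam * (INR 2 * u ^ 1 * 1 - 0)))).
  2: { simpl. field. auto. }
  apply (isd_ext (fun z => / eps * (lam * (z ^ 2 - v ^ 2)))). intros; unfold Rdiv; ring.
  apply isd_scal, isd_scal, isd_minus. apply (isd_pow (fun z => z)), isd_id. apply isd_const.
Qed.

Lemma Qf_d2 eps lam u v : eps <> 0 -> is_derive (fun z => Qf eps lam u z) v (lam * (- (2 * v)) / eps).
Proof.
  intros He. unfold Qf.
  apply (isd_eq _ _ (/ eps * (lam * (0 - INR 2 * v ^ 1 * 1)))).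
  2: { simpl. field. auto. }
  apply (isd_ext (fun z => / eps * (lam * (u ^ 2 - z ^ 2)))). intros; unfold Rdiv; ring.
  apply isd_scal, isd_scal, isd_minus. apply isd_const. apply (isd_pow (fun z => z)), isd_id.
Qed.

Lemma Kg_d1 eps lam phi dphi u v : eps <> 0 -> C1 phi dphi ->
  is_derive (fun z => Kg eps lam phi z v) u (dK1 eps lam phi dphi u v).
Proof.
  intros He [Hd _]. unfold Kg, dK1.
  apply (isd_eq _ _ ((- lam / eps * 1) * phi (Qf eps lam u v) + (- lam / eps * u) *
     (lam * (2 * u) / eps * dphi (Qf eps lam u v)))).
  2: ring.
  apply (isd_mult (fun z => - lam / eps * z) (fun z => phi (Qf eps lam z v))).
  apply isd_scal, isd_id.
  apply (isd_comp phi (fun z => Qf eps lam z v)). apply Hd. apply Qf_d1; auto.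
Qed.

Lemma Kg_d2 eps lam phi dphi u v : eps <> 0 -> C1 phi dphi ->
  is_derive (fun z => Kg eps lam phi u z) v (dK2 eps lam phi dphi u v).
Proof.
  intros He [Hd _]. unfold Kg, dK2.
  apply isd_scal.
  apply (isd_comp phi (fun z => Qf eps lam u z)). apply Hd. apply Qf_d2; auto.
Qed.

Lemma g2cont_id1 : g2cont (fun u _ => u). Proof. intros x y; apply continuity_2d_pt_id1. Qed.
Lemma g2cont_id2 : g2cont (fun _ v => v). Proof. intros x y; apply continuity_2d_pt_id2. Qed.
Lemma g2cont_pow f n : g2cont f -> g2cont (fun u v => f u v ^ n).
Proof. intros H. apply (g2cont_comp f (fun y => y ^ n)); auto. apply gcont_pow, gcont_id. Qed.

Ltac g2c := repeat first [assumption | apply g2cont_const | apply g2cont_id1 | apply g2cont_id2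
  | apply g2cont_mult | apply g2cont_plus | apply g2cont_minus | apply g2cont_opp | apply g2cont_pow].

Lemma Qf_g2cont eps lam : g2cont (Qf eps lam).
Proof.
  unfold Qf, Rdiv. g2c.
Qed.

Lemma g2cont_compQ eps lam phi : gcont phi -> g2cont (fun u v => phi (Qf eps lam u v)).
Proof. intros H. apply (g2cont_comp (Qf eps lam) phi); auto. apply Qf_g2cont. Qed.

Lemma Kg_g2cont eps lam phi : gcont phi -> g2cont (Kg eps lam phi).
Proof. intros H. unfold Kg. apply g2cont_mult. g2c. apply g2cont_compQ; auto. Qed.

Lemma dK1_g2cont eps lam phi dphi : gcont phi -> gcont dphi -> g2cont (dK1 eps lam phi dphi).
Proof. intros H1 H2. unfold dK1. apply g2cont_plus.
  apply g2cont_mult. g2c. apply g2cont_compQ; auto.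
  apply g2cont_mult. g2c. apply g2cont_mult. unfold Rdiv; g2c. apply g2cont_compQ; auto. Qed.

Lemma dK2_g2cont eps lam phi dphi : gcont dphi -> g2cont (dK2 eps lam phi dphi).
Proof. intros H2. unfold dK2.
  apply g2cont_mult. g2c. apply g2cont_mult. unfold Rdiv; g2c. apply g2cont_compQ; auto. Qed.

Lemma kernel_identity eps lam x s : eps <> 0 ->
  Kg eps lam Jfun x s - Kg eps lam Ifun x s =
  RInt (fun y => Kg eps lam Jfun x y * Kg eps lam Ifun y s) s x.
Proof.
  intros He.
  set (Z := fun y => Qf eps lam y s).
  set (F := fun w => Jfun (Z x - w) * Ifun w).
  assert (HF : gcont F) by (apply conv_integrand_gcont; [apply J_gcont | apply I_gcont]).
  assert (HZs : Z s = 0) by (unfold Z, Qf; field; auto).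
  assert (Hc : RInt (fun y => lam * (2 * y) / eps * F (Z y)) s x = 2 * (Ifun (Z x) - Jfun (Z x))).
  { rewrite <- convJI. unfold conv. fold F. rewrite <- HZs.
    apply (RInt_comp F Z (fun y => lam * (2 * y) / eps) s x).
    - intros; apply gcont_continuous, HF.
    - intros y _. split. apply Qf_d1; auto. apply gcont_continuous. unfold Rdiv. apply gcont_mult.
      apply gcont_mult. apply gcont_const. apply gcont_mult. apply gcont_const. apply gcont_id. apply gcont_const. }
  rewrite <- (RInt_ext' (fun y => (lam / eps * x / 2) * (lam * (2 * y) / eps * F (Z y)))).
  2: { intros y _. unfold F, Z, Kg.
       replace (Qf eps lam x y) with (Qf eps lam x s - Qf eps lam y s) by (unfold Qf; field; auto).
       field. auto. }
  rewrite RInt_scal', Hc.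
  unfold Kg. unfold Z. field. auto.
  apply ex_RInt_gcont. apply gcont_mult. 2: apply (gcont_comp Z F); auto.
  unfold Rdiv; apply gcont_mult; [apply gcont_mult; [apply gcont_const| apply gcont_mult; [apply gcont_const|apply gcont_id]] | apply gcont_const].
  unfold Z, Qf, Rdiv. apply gcont_mult; [|apply gcont_const]. apply gcont_mult; [apply gcont_const|].
  apply gcont_minus. apply gcont_pow, gcont_id. apply gcont_const.
Qed.


Lemma g2cont_swap f : g2cont f -> g2cont (fun x y => f y x).
Proof.
  intros H x y e. destruct (H y x e) as [d Hd]. exists d. intros u v Hu Hv. apply Hd; auto.
Qed.

Lemma volt_der (Kf dKf : R -> R -> R) Uc x :
  (forall u v, is_derive (fun z => Kf z v) u (dKf u v)) -> g2cont dKf -> g2cont Kf -> gcont Uc ->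
  is_derive (fun x => RInt (fun s => Kf x s * Uc s) 0 x) x
    (RInt (fun s => dKf x s * Uc s) 0 x + Kf x x * Uc x).
Proof.
  intros Hd Hc HK HU.
  apply (isd_eq _ _ (RInt (fun s => dKf x s * Uc s) 0 x - Kf x 0 * Uc 0 * 0 + Kf x x * Uc x * 1)).
  2: ring.
  apply (leibniz (fun z s => Kf z s * Uc s) (fun z s => dKf z s * Uc s) (fun _ => 0) (fun z => z) (fun _ => 0) (fun _ => 1) x).
  - intros u v. apply (isd_eq _ _ (dKf u v * Uc v + Kf u v * 0)). 2: ring.
    apply (isd_mult (fun z => Kf z v) (fun _ => Uc v)). apply Hd. apply isd_const.
  - apply g2cont_mult; auto. apply g2cont_2; auto.
  - intros u. apply gcont_mult; auto. apply g2cont_sect; auto.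
  - apply isd_const.
  - apply isd_id.
Qed.

Lemma volt_gcont (Kf dKf : R -> R -> R) Uc :
  (forall u v, is_derive (fun z => Kf z v) u (dKf u v)) -> g2cont dKf -> g2cont Kf -> gcont Uc ->
  gcont (fun x => RInt (fun s => Kf x s * Uc s) 0 x).
Proof.
  intros. eapply gcont_of_der. intros; apply volt_der; eauto.
Qed.

Lemma fubini_tri (Lx : R -> R) (Kf dK1 dK2 : R -> R -> R) Uc x :
  gcont Lx -> gcont Uc -> g2cont Kf ->
  (forall u v, is_derive (fun z => Kf z v) u (dK1 u v)) -> g2cont dK1 ->
  (forall u v, is_derive (fun z => Kf u z) v (dK2 u v)) -> g2cont dK2 ->
  RInt (fun y => Lx y * RInt (fun s => Kf y s * Uc s) 0 y) 0 x =
  RInt (fun s => Uc s * RInt (fun y => Lx y * Kf y s) s x) 0 x.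
Proof.
  intros HL HU HK Hd1 Hc1 Hd2 Hc2.
  set (G := fun y => RInt (fun s => Kf y s * Uc s) 0 y).
  assert (HG : gcont G) by (unfold G; apply (volt_gcont Kf dK1 Uc); assumption).
  assert (Hh : forall z, gcont (fun s => RInt (fun y => Lx y * Kf y s) s z)).
  { intros z. eapply gcont_of_der. intros s.
    apply (leibniz (fun s y => Lx y * Kf y s) (fun s y => Lx y * dK2 y s) (fun s => s) (fun _ => z)
             (fun _ => 1) (fun _ => 0) s).
    - intros u v. apply isd_scal, Hd2.
    - apply g2cont_swap. apply g2cont_mult. apply g2cont_1; auto. auto.
    - intros u. apply gcont_mult; auto. apply g2cont_sect1; auto.
    - apply isd_id.
    - apply isd_const. }
  assert (H0 : forall z, is_derive (fun z => RInt (fun y => Lx y * G y) 0 z -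
      RInt (fun s => Uc s * RInt (fun y => Lx y * Kf y s) s z) 0 z) z 0).
  { intros z.
    apply (isd_eq _ _ (Lx z * G z - (RInt (fun s => Uc s * (Lx z * Kf z s)) 0 z
        - Uc 0 * RInt (fun y => Lx y * Kf y 0) 0 z * 0 + Uc z * RInt (fun y => Lx y * Kf y z) z z * 1))).
    - apply (isd_minus (fun z => RInt (fun y => Lx y * G y) 0 z)
        (fun z => RInt (fun s => Uc s * RInt (fun y => Lx y * Kf y s) s z) 0 z)).
      apply (isd_RInt (fun y => Lx y * G y)). apply gcont_mult; assumption.
      apply (leibniz (fun z s => Uc s * RInt (fun y => Lx y * Kf y s) s z)
                     (fun z s => Uc s * (Lx z * Kf z s)) (fun _ => 0) (fun z => z) (fun _ => 0) (fun _ => 1) z).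
      + intros u v. apply (isd_scal (fun z => RInt (fun y => Lx y * Kf y v) v z)).
        apply (isd_RInt (fun y => Lx y * Kf y v)). apply gcont_mult; auto. apply g2cont_sect1; auto.
      + apply g2cont_mult. apply g2cont_2; auto. apply g2cont_mult. apply g2cont_1; auto. auto.
      + intros u. apply gcont_mult; auto.
      + apply isd_const.
      + apply isd_id.
    - rewrite RInt_point'. unfold G.
      rewrite <- RInt_scal'.
      2: { apply ex_RInt_gcont, gcont_mult; auto. apply g2cont_sect; auto. }
      assert (E : RInt (fun s => Uc s * (Lx z * Kf z s)) 0 z = RInt (fun x0 => Lx z * (Kf z x0 * Uc x0)) 0 z)
        by (apply RInt_ext'; intros; ring).
      rewrite E. ring. }
  pose proof (zero_der _ x H0) as E. cbv beta in E. rewrite !RInt_point' in E. unfold G in *. lra.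
Qed.

Definition dI := PSeries (PS_derive aI).
Definition dJ := PSeries (PS_derive aJ).

Section Kfacts.
Variables eps lam : R.
Hypothesis He : eps <> 0.

Lemma K_g2 : g2cont (Kg eps lam Ifun). Proof. apply Kg_g2cont, I_gcont. Qed.
Lemma L_g2 : g2cont (Kg eps lam Jfun). Proof. apply Kg_g2cont, J_gcont. Qed.
Lemma K_d1 u v : is_derive (fun z => Kg eps lam Ifun z v) u (dK1 eps lam Ifun dI u v).
Proof. apply Kg_d1; auto. apply I_C1. Qed.
Lemma L_d1 u v : is_derive (fun z => Kg eps lam Jfun z v) u (dK1 eps lam Jfun dJ u v).
Proof. apply Kg_d1; auto. apply J_C1. Qed.
Lemma K_d2 u v : is_derive (fun z => Kg eps lam Ifun u z) v (dK2 eps lam Ifun dI u v).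
Proof. apply Kg_d2; auto. apply I_C1. Qed.
Lemma K_d1c : g2cont (dK1 eps lam Ifun dI). Proof. apply dK1_g2cont. apply I_gcont. apply I_C1. Qed.
Lemma L_d1c : g2cont (dK1 eps lam Jfun dJ). Proof. apply dK1_g2cont. apply J_gcont. apply J_C1. Qed.
Lemma K_d2c : g2cont (dK2 eps lam Ifun dI). Proof. apply dK2_g2cont. apply I_C1. Qed.

Lemma inverse_tr Uc x : gcont Uc ->
  Uc x = (Uc x - RInt (fun s => Kg eps lam Ifun x s * Uc s) 0 x)
    + RInt (fun y => Kg eps lam Jfun x y * (Uc y - RInt (fun s => Kg eps lam Ifun y s * Uc s) 0 y)) 0 x.
Proof.
  intros HU.
  set (K := Kg eps lam Ifun). set (L := Kg eps lam Jfun).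
  assert (HG : gcont (fun y => RInt (fun s => K y s * Uc s) 0 y))
    by (apply (volt_gcont K (dK1 eps lam Ifun dI)); auto; [apply K_d1 | apply K_d1c | apply K_g2]).
  assert (HLx : gcont (L x)) by (apply g2cont_sect, L_g2).
  rewrite (RInt_ext' (fun y => L x y * (Uc y - RInt (fun s => K y s * Uc s) 0 y)) (fun y => L x y * Uc y - L x y * RInt (fun s => K y s * Uc s) 0 y)).
  2: intros; ring.
  rewrite RInt_minus'.
  2: apply ex_RInt_gcont, gcont_mult; auto.
  2: apply ex_RInt_gcont, gcont_mult; auto.
  rewrite (fubini_tri (L x) K (dK1 eps lam Ifun dI) (dK2 eps lam Ifun dI) Uc x); auto.
  2: apply K_g2. 2: apply K_d1. 2: apply K_d1c. 2: apply K_d2. 2: apply K_d2c.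
  rewrite (RInt_ext' (fun s => Uc s * RInt (fun y => L x y * K y s) s x) (fun s => L x s * Uc s - K x s * Uc s)).
  2: { intros s _. unfold L, K. rewrite <- kernel_identity; auto. ring. }
  rewrite RInt_minus'.
  ring.
  apply ex_RInt_gcont, gcont_mult; auto.
  apply ex_RInt_gcont, gcont_mult; auto. apply g2cont_sect, K_g2.
Qed.

End Kfacts.

Definition ddI := PSeries (PS_derive (PS_derive aI)).
Definition dddI := PSeries (PS_derive (PS_derive (PS_derive aI))).

Lemma dI_C1 : C1 dI ddI.
Proof. split. intros; apply PS_der, entire_derive, entire_aI.
  apply PS_gcont, entire_derive, entire_derive, entire_aI. Qed.
Lemma ddI_C1 : C1 ddI dddI.
Proof. split. intros; apply PS_der, entire_derive, entire_derive, entire_aI.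
  apply PS_gcont, entire_derive, entire_derive, entire_derive, entire_aI. Qed.

Section kf.
Variables eps lam q : R.
Hypothesis He : eps <> 0.

Definition cA := rr eps lam q * (- lam / eps * 1) + - lam / eps.
Definition cB := - lam / eps * 1 * (lam * (2 * 1) / eps).
Definition Q1 (y : R) := Qf eps lam 1 y.
Definition qd (y : R) := lam * (- (2 * y)) / eps.
Definition kap (z : R) := cA * Ifun z + cB * dI z.
Definition kap1 (z : R) := cA * dI z + cB * ddI z.
Definition kap2 (z : R) := cA * ddI z + cB * dddI z.

Lemma kap_C1 : C1 kap kap1.
Proof.
  destruct I_C1 as [H1 H1c]. destruct dI_C1 as [H2 H2c]. destruct ddI_C1 as [H3 H3c].
  split. intros x. apply isd_plus; apply isd_scal; auto.
  apply gcont_plus; apply gcont_mult; try apply gcont_const; auto.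
Qed.
Lemma kap1_C1 : C1 kap1 kap2.
Proof.
  destruct I_C1 as [H1 H1c]. destruct dI_C1 as [H2 H2c]. destruct ddI_C1 as [H3 H3c].
  split. intros x. apply isd_plus; apply isd_scal; auto.
  apply gcont_plus; apply gcont_mult; try apply gcont_const; auto.
Qed.

Lemma kfun_eq y : kfun eps lam q y = kap (Q1 y).
Proof.
  assert (HD : Derive (fun x => Kker eps lam x y) 1 = dK1 eps lam Ifun dI 1 y).
  { apply is_derive_unique. apply (isd_ext (fun x => Kg eps lam Ifun x y)).
    intros; rewrite Kker_eq; auto. apply K_d1; auto. }
  unfold kfun. rewrite HD, Kker_eq.
  unfold kap, cA, cB, Kg, dK1, Q1. ring.
Qed.

Definition k1 (y : R) := kap1 (Q1 y) * qd y.
Definition k2 (y : R) := kap2 (Q1 y) * qd y * qd y + kap1 (Q1 y) * (lam * (-2) / eps).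

Lemma qd_der y : is_derive qd y (lam * (-2) / eps).
Proof. unfold qd. apply (isd_eq _ _ (/ eps * (lam * (- (2 * 1))))). 2: field; auto.
  apply (isd_ext (fun z => / eps * (lam * (- (2 * z))))). intros; unfold Rdiv; ring.
  apply isd_scal, isd_scal. apply (isd_eq _ _ (- (2 * 1))). 2: ring.
  apply (isd_ext (fun z => - (2 * z))). auto. apply (isd_eq _ _ (- (2 * 1))); auto.
  apply (isd_ext (fun z => -1 * (2 * z))). intros; ring.
  apply (isd_eq _ _ (-1 * (2 * 1))). 2: ring. apply isd_scal, isd_scal, isd_id.
Qed.

Lemma kfun_der y : is_derive (kfun eps lam q) y (k1 y).
Proof.
  apply (isd_ext (fun y => kap (Q1 y))). intros; rewrite kfun_eq; auto.
  unfold k1. rewrite Rmult_comm.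
  apply (isd_comp kap Q1). apply kap_C1. unfold Q1, qd. apply Qf_d2; auto.
Qed.

Lemma k1_der y : is_derive k1 y (k2 y).
Proof.
  unfold k1, k2.
  apply (isd_eq _ _ ((qd y * kap2 (Q1 y)) * qd y + kap1 (Q1 y) * (lam * (-2) / eps))). 2: ring.
  apply (isd_mult (fun y => kap1 (Q1 y)) qd).
  apply (isd_comp kap1 Q1). apply kap1_C1. unfold Q1, qd. apply Qf_d2; auto.
  apply qd_der.
Qed.

Lemma Q1_gcont : gcont Q1.
Proof. intros y. apply (g2cont_sect (Qf eps lam) 1 (Qf_g2cont eps lam)). Qed.
Lemma qd_gcont : gcont qd.
Proof. apply (gcont_of_der qd (fun _ => lam * (-2) / eps)). apply qd_der. Qed.

Lemma kfun_gcont : gcont (kfun eps lam q).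
Proof. apply (gcont_of_der _ k1). apply kfun_der. Qed.
Lemma k1_gcont : gcont k1.
Proof. apply (gcont_of_der _ k2). apply k1_der. Qed.
Lemma k2_gcont : gcont k2.
Proof.
  destruct kap1_C1 as [_ H2]. assert (H1 := C1_gcont _ _ kap1_C1).
  unfold k2. apply gcont_plus. apply gcont_mult. apply gcont_mult. apply (gcont_comp Q1 kap2); auto.
  apply Q1_gcont. apply qd_gcont. apply qd_gcont. apply gcont_mult. apply (gcont_comp Q1 kap1); auto.
  apply Q1_gcont. apply gcont_const.
Qed.

Lemma Derive_k y : Derive (kfun eps lam q) y = k1 y.
Proof. apply is_derive_unique, kfun_der. Qed.
Lemma Derive_k_fun : Derive (kfun eps lam q) = k1.
Proof. apply functional_extensionality, Derive_k. Qed.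
Lemma Derive2_k y : Derive (Derive (kfun eps lam q)) y = k2 y.
Proof. rewrite Derive_k_fun. apply is_derive_unique, k1_der. Qed.
Lemma k1_0 : k1 0 = 0.
Proof. unfold k1, qd. replace (lam * - (2 * 0) / eps) with 0 by (field; auto). ring. Qed.

End kf.

Definition cl (y : R) : R := Rmax 0 (Rmin 1 y).
Lemma cl_range y : 0 <= cl y <= 1.
Proof. unfold cl, Rmax, Rmin. repeat destruct Rle_dec; lra. Qed.
Lemma cl_id y : 0 <= y <= 1 -> cl y = y.
Proof. intros H; unfold cl, Rmax, Rmin. repeat destruct Rle_dec; lra. Qed.
Lemma cl_lip y z : Rabs (cl y - cl z) <= Rabs (y - z).
Proof. unfold cl, Rmax, Rmin. repeat destruct Rle_dec;
  repeat (destruct (Rabs_case (y - z)) as [[Ha Hb]|[Ha Hb]] || idtac);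
  unfold Rabs; repeat destruct Rcase_abs; lra. Qed.

Lemma cont_rect_gcont f a b t : cont_rect f a b -> a < t < b -> gcont (fun y => f (cl y) t).
Proof.
  intros H Ht y e He.
  destruct (H (cl y) t (cl_range y) Ht e He) as [d [Hd Hd']].
  exists d; split; auto. intros z [_ Hz]. simpl in *. unfold R_dist in *.
  apply Hd'; auto. apply cl_range. pose proof (cl_lip z y); lra.
  rewrite Rminus_eq_0, Rabs_R0; auto.
Qed.

Lemma cont_rect_2d f a b t y : cont_rect f a b -> a < t < b ->
  continuity_2d_pt (fun u v => f (cl v) u) t y.
Proof.
  intros H Ht e.
  destruct (H (cl y) t (cl_range y) Ht e (cond_pos e)) as [d [Hd Hd']].
  assert (Hp : 0 < Rmin d (Rmin (t - a) (b - t))).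
  { repeat apply Rmin_pos; lra. }
  exists (mkposreal _ Hp). intros u v Hu Hv. simpl in *.
  assert (Hm1 := Rmin_l d (Rmin (t - a) (b - t))).
  assert (Hm2 := Rmin_r d (Rmin (t - a) (b - t))).
  assert (Hm3 := Rmin_l (t - a) (b - t)). assert (Hm4 := Rmin_r (t - a) (b - t)).
  apply Hd'. apply cl_range.
  split; apply Rabs_lt_between' in Hu; lra.
  pose proof (cl_lip v y); lra. lra.
Qed.

Lemma FTC01 (g dg dgc : R -> R) :
  (forall x, 0 <= x <= 1 -> is_derive g x (dg x)) ->
  (forall x, 0 <= x <= 1 -> dg x = dgc x) -> gcont dgc ->
  RInt dgc 0 1 = g 1 - g 0.
Proof.
  intros Hd Heq Hc.
  destruct (MVT_gen (fun x => g x - RInt dgc 0 x) 0 1 (fun _ => 0)) as [c [_ Hcc]].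
  - intros x Hx. rewrite Rmin_left, Rmax_right in Hx by lra.
    apply (isd_eq _ _ (dg x - dgc x)). 2: rewrite Heq; lra.
    apply (isd_minus g (fun x => RInt dgc 0 x)). apply Hd; lra. apply isd_RInt; auto.
  - intros x Hx. rewrite Rmin_left, Rmax_right in Hx by lra.
    apply continuity_pt_filterlim. apply (ex_derive_continuous (V:=R_NormedModule) (fun x => g x - RInt dgc 0 x)).
    eexists. apply (isd_minus g (fun x => RInt dgc 0 x)). apply Hd; lra. apply isd_RInt; auto.
  - rewrite RInt_point' in Hcc. lra.
Qed.

Lemma RInt_sq_ge0 (f : R -> R) a b : a <= b -> gcont f -> 0 <= RInt (fun x => f x ^ 2) a b.
Proof.
  intros Hab Hf. apply RInt_ge_0; auto. apply ex_RInt_gcont, gcont_pow; auto.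
  intros; nra.
Qed.

Lemma CS (f g : R -> R) a b : a <= b -> gcont f -> gcont g ->
  (RInt (fun x => f x * g x) a b) ^ 2 <= RInt (fun x => f x ^ 2) a b * RInt (fun x => g x ^ 2) a b.
Proof.
  intros Hab Hf Hg.
  set (A := RInt (fun x => f x ^ 2) a b). set (B := RInt (fun x => g x ^ 2) a b).
  set (C := RInt (fun x => f x * g x) a b).
  assert (Hq : forall l, 0 <= A - 2 * l * C + l ^ 2 * B).
  { intros l.
    assert (E : RInt (fun x => (f x - l * g x) ^ 2) a b = A - 2 * l * C + l ^ 2 * B).
    { unfold A, B, C.
      rewrite (RInt_ext' _ (fun x => f x ^ 2 - (2 * l) * (f x * g x) + l ^ 2 * g x ^ 2)).
      2: intros; ring.
      rewrite RInt_plus', RInt_minus', !RInt_scal'; auto;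
      repeat (apply ex_RInt_gcont); repeat first [apply gcont_minus | apply gcont_plus | apply gcont_mult
        | apply gcont_pow | apply gcont_const | assumption]. }
    rewrite <- E. apply RInt_sq_ge0; auto.
    apply gcont_minus; auto. apply gcont_mult; auto. apply gcont_const. }
  assert (HB : 0 <= B) by (apply RInt_sq_ge0; auto).
  destruct (Req_dec B 0) as [HB0|HB0].
  - destruct (Req_dec C 0) as [HC0|HC0].
    + rewrite HC0, HB0. nra.
    + exfalso. specialize (Hq ((A + 1) / (2 * C))). rewrite HB0 in Hq.
      assert (A - 2 * ((A + 1) / (2 * C)) * C = -1) by (field; auto). nra.
  - specialize (Hq (C / B)).
    assert (A - 2 * (C / B) * C + (C / B) ^ 2 * B = (A * B - C ^ 2) / B) by (field; auto).
    rewrite H in Hq.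
    assert (0 < B) by lra.
    assert (0 <= A * B - C ^ 2).
    { apply Rmult_le_reg_r with (r := / B). apply Rinv_0_lt_compat; auto.
      rewrite Rmult_0_l. exact Hq. }
    lra.
Qed.

Lemma gcont_ext (f g : R -> R) : (forall x, f x = g x) -> gcont f -> gcont g.
Proof. intros H Hf. replace g with f; auto. apply functional_extensionality; auto. Qed.

Section bounds.
Variables eps lam : R.
Hypothesis He : eps <> 0.
Variable Uc : R -> R.
Hypothesis HU : gcont Uc.

Let K := Kg eps lam Ifun.
Let L := Kg eps lam Jfun.
Definition Wc (x : R) := Uc x - RInt (fun s => Kg eps lam Ifun x s * Uc s) 0 x.
Definition Tc (x : R) := RInt (fun y => Kg eps lam Jfun x y * Wc y) 0 x.

Lemma Wc_gcont : gcont Wc.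
Proof.
  unfold Wc. apply gcont_minus; auto.
  apply (volt_gcont _ (dK1 eps lam Ifun dI)); auto.
  apply K_d1; auto. apply K_d1c. apply K_g2.
Qed.

Lemma Tc_gcont : gcont Tc.
Proof.
  unfold Tc. apply (volt_gcont _ (dK1 eps lam Jfun dJ)); auto.
  apply L_d1; auto. apply L_d1c. apply L_g2. apply Wc_gcont.
Qed.

Lemma Uc_inv x : Uc x = Wc x + Tc x.
Proof. unfold Tc, Wc. apply inverse_tr; auto. Qed.

Lemma L2_der u v : is_derive (fun z => Kg eps lam Jfun z v ^ 2) u
  (INR 2 * Kg eps lam Jfun u v ^ 1 * dK1 eps lam Jfun dJ u v).
Proof. apply (isd_pow (fun z => Kg eps lam Jfun z v)). apply L_d1; auto. Qed.

Lemma ML_gcont : gcont (fun x => RInt (fun y => Kg eps lam Jfun x y ^ 2) 0 x).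
Proof.
  apply (gcont_ext (fun x => RInt (fun y => Kg eps lam Jfun x y ^ 2 * 1) 0 x)).
  intros; apply RInt_ext'; intros; ring.
  apply (volt_gcont _ (fun u v => INR 2 * Kg eps lam Jfun u v ^ 1 * dK1 eps lam Jfun dJ u v)).
  apply L2_der. apply g2cont_mult. apply g2cont_mult. apply g2cont_const.
  apply g2cont_pow, L_g2. apply L_d1c. apply g2cont_pow, L_g2. apply gcont_const.
Qed.

Definition Mconst := RInt (fun x => RInt (fun y => (Lker eps lam x y) ^ 2) 0 x) 0 1.

Lemma Lker_fun : Lker eps lam = Kg eps lam Jfun.
Proof. apply functional_extensionality; intros x; apply functional_extensionality; intros y; apply Lker_eq. Qed.

Lemma Mconst_ge0 : 0 <= Mconst.
Proof.
  unfold Mconst. rewrite Lker_fun. apply RInt_ge_0. lra. apply ex_RInt_gcont, ML_gcont.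
  intros x Hx. apply RInt_sq_ge0. lra. apply g2cont_sect, L_g2.
Qed.

Lemma Uc_bound : RInt (fun x => Uc x ^ 2) 0 1 <= (1 + sqrt Mconst) ^ 2 * RInt (fun x => Wc x ^ 2) 0 1.
Proof.
  assert (HW := Wc_gcont). assert (HT := Tc_gcont).
  set (N := RInt (fun x => Wc x ^ 2) 0 1).
  set (S := RInt (fun x => Wc x * Tc x) 0 1).
  set (P := RInt (fun x => Tc x ^ 2) 0 1).
  assert (E : RInt (fun x => Uc x ^ 2) 0 1 = N + 2 * S + P).
  { rewrite (RInt_ext' _ (fun x => Wc x ^ 2 + 2 * (Wc x * Tc x) + Tc x ^ 2)).
    2: intros; rewrite Uc_inv; ring.
    unfold N, S, P. rewrite !RInt_plus', RInt_scal'; auto;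
    repeat (apply ex_RInt_gcont); repeat first [assumption | apply gcont_minus | apply gcont_plus | apply gcont_mult
        | apply gcont_pow | apply gcont_const]. }
  assert (HN : 0 <= N) by (apply RInt_sq_ge0; auto; lra).
  assert (HS : S ^ 2 <= N * P) by (apply CS; auto; lra).
  assert (HP : P <= Mconst * N).
  { unfold P, Mconst. rewrite Lker_fun. rewrite <- RInt_scal_r.
    2: apply ex_RInt_gcont, ML_gcont.
    apply RInt_le. lra. apply ex_RInt_gcont, gcont_pow; auto.
    apply ex_RInt_gcont, gcont_mult. apply ML_gcont. apply gcont_const.
    intros x Hx. unfold Tc.
    apply Rle_trans with (RInt (fun y => Kg eps lam Jfun x y ^ 2) 0 x * RInt (fun y => Wc y ^ 2) 0 x).
    apply CS; auto. lra. apply g2cont_sect, L_g2.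
    apply Rmult_le_compat_l. apply RInt_sq_ge0. lra. apply g2cont_sect, L_g2.
    unfold N. rewrite <- (RInt_Chasles' _ 0 x 1).
    assert (0 <= RInt (fun y => Wc y ^ 2) x 1) by (apply RInt_sq_ge0; auto; lra). lra.
    apply ex_RInt_gcont, gcont_pow; auto. apply ex_RInt_gcont, gcont_pow; auto. }
  assert (HM := Mconst_ge0).
  assert (Hs := sqrt_pos Mconst). assert (Hss := sqrt_sqrt Mconst HM).
  set (s := sqrt Mconst) in *.
  assert (HS2 : S <= s * N).
  { assert (S ^ 2 <= (s * N) ^ 2).
    { replace ((s * N) ^ 2) with (s * s * N * N) by ring. rewrite Hss. nra. }
    assert (0 <= s * N) by nra. nra. }
  rewrite E. rewrite <- Hss in HP. nra.
Qed.

Lemma T1_bound : (Tc 1) ^ 2 <= RInt (fun y => (Lker eps lam 1 y) ^ 2) 0 1 * RInt (fun x => Wc x ^ 2) 0 1.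
Proof.
  unfold Tc. rewrite Lker_fun. apply CS. lra. apply g2cont_sect, L_g2. apply Wc_gcont.
Qed.

End bounds.

Lemma sq5 x1 x2 x3 x4 x5 : (x1 + x2 + x3 + x4 + x5) ^ 2 <= 6 * x1 ^ 2 + 3 * x2 ^ 2 + 6 * x3 ^ 2 + 6 * x4 ^ 2 + 6 * x5 ^ 2.
Proof.
  assert (H := Rle_0_sqr (2 * x2 - (x1 + x3 + x4 + x5))).
  pose proof (Rle_0_sqr (x1 - x3)). pose proof (Rle_0_sqr (x1 - x4)). pose proof (Rle_0_sqr (x1 - x5)).
  pose proof (Rle_0_sqr (x3 - x4)). pose proof (Rle_0_sqr (x3 - x5)). pose proof (Rle_0_sqr (x4 - x5)).
  unfold Rsqr in *. nra.
Qed.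

Lemma RInt_nonint (f g : R -> R) a b : ~ ex_RInt f a b -> ~ ex_RInt g a b -> RInt f a b = RInt g a b.
Proof.
  intros Hf Hg. unfold RInt.
  assert (E : is_RInt (V:=R_CompleteNormedModule) f a b = is_RInt g a b).
  { apply functional_extensionality; intros l. apply propositional_extensionality; split; intros H.
    exfalso; apply Hf; exists l; auto. exfalso; apply Hg; exists l; auto. }
  rewrite E; reflexivity.
Qed.

Lemma loc_int a b t : a < t < b -> locally t (fun s => a < s < b).
Proof.
  intros H. assert (Hp : 0 < Rmin (t - a) (b - t)) by (apply Rmin_pos; lra).
  exists (mkposreal _ Hp). intros s Hs.
  change (Rabs (s + - t) < Rmin (t - a) (b - t)) in Hs.
  assert (Hm1 := Rmin_l (t - a) (b - t)). assert (Hm2 := Rmin_r (t - a) (b - t)).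
  apply Rabs_lt_between' in Hs. lra.
Qed.

Lemma ex_RInt_plus' (f g : R -> R) a b : ex_RInt f a b -> ex_RInt g a b -> ex_RInt (fun x => f x + g x) a b.
Proof. intros; exact (ex_RInt_plus f g a b H H0). Qed.

Ltac gc9 := repeat first [assumption | apply gcont_minus | apply gcont_plus | apply gcont_mult
        | apply gcont_pow | apply gcont_const].
Ltac ri := apply ex_RInt_gcont; gc9.

Lemma ex_RInt_scal' (f : R -> R) a b k : ex_RInt f a b -> ex_RInt (fun x => k * f x) a b.
Proof. intros; exact (ex_RInt_scal f a b k H). Qed.

Lemma alg (eps lam q k0 kone k1one R0 R1 R2 Rk2 P u0 Dx0 Dx1 uh1 Uin0 dd Dtv Bv : R) : eps <> 0 ->
  Dtv = eps * R2 + lam * R0 + u0 * P -> R2 = kone * Dx1 - k0 * Dx0 - R1 ->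
  R1 = k1one * uh1 - Rk2 -> Dx1 = Uin0 - q * uh1 -> Uin0 = dd + R0 ->
  Dx0 = - lam / (2 * eps) * u0 -> Bv = eps * Rk2 + eps * kone * R0 + lam * R0 ->
  - Dtv = - eps * kone * dd - Bv + (eps * q * kone + eps * k1one) * uh1 - (lam * k0 / 2 + P) * u0.
Proof. intros He H1 H2 H3 H4 H5 H6 H7. subst. field. auto. Qed.

Theorem lemma2 (eps lam q : R) (u uh : R -> R -> R) (tj : nat -> R) :
  0 < eps -> 0 < lam -> (lam + eps) / (2 * eps) < q ->
  tj 0%nat = 0 -> (forall j : nat, tj j < tj (S j)) ->
  closed_loop eps lam q u uh tj ->
  forall (j : nat) (t : R), tj j < t < tj (S j) ->
    ex_derive (dhold eps lam q uh tj j) t /\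
    (Derive (dhold eps lam q uh tj j) t) ^ 2 <=
      rho1 eps lam q * (dhold eps lam q uh tj j t) ^ 2
      + alpha1 eps lam q * RInt (fun x => (what eps lam uh x t) ^ 2) 0 1
      + alpha2 eps lam q * (what eps lam uh 1 t) ^ 2
      + alpha3 eps lam q * (wtilde eps lam q u uh 0 t) ^ 2.
Proof.
  intros Heps Hlam Hq Ht0 Hinc Hcl j t Ht.
  assert (He : eps <> 0) by lra.
  destruct (Hcl j) as [_ [[Hex [C0 [C1' [C2 Ct]]]] Hpde]].
  set (a := tj j) in *. set (b := tj (S j)) in *.
  set (Uc := fun y => uh (cl y) t).
  assert (HUc : gcont Uc) by (apply (cont_rect_gcont uh a b t C0 Ht)).
  assert (Hk := kfun_gcont eps lam q He).
  assert (Hk1 := k1_gcont eps lam q He).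
  assert (Hk2 := k2_gcont eps lam q He).
  assert (Hwhat : forall x, 0 <= x <= 1 -> what eps lam uh x t = Wc eps lam Uc x).
  { intros x Hx. unfold what, Wc, Uc. rewrite (cl_id x Hx). f_equal. apply RInt_ext'. intros y Hy.
    rewrite Rmin_left, Rmax_right in Hy by lra. rewrite (cl_id y) by lra. rewrite Kker_eq. auto. }
  assert (HN : RInt (fun x => what eps lam uh x t ^ 2) 0 1 = RInt (fun x => Wc eps lam Uc x ^ 2) 0 1).
  { apply RInt_ext'. intros x Hx. rewrite Rmin_left, Rmax_right in Hx by lra. rewrite Hwhat; auto; lra. }
  rewrite HN. rewrite (Hwhat 1) by lra.
  assert (HWg := Wc_gcont eps lam He Uc HUc).
  set (N := RInt (fun x => Wc eps lam Uc x ^ 2) 0 1) in *.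
  assert (HN0 : 0 <= N) by (apply RInt_sq_ge0; auto; lra).
  set (fk := fun y => eps * k2 eps lam q y + eps * kfun eps lam q 1 * kfun eps lam q y + lam * kfun eps lam q y).
  assert (Hfk : gcont fk) by (unfold fk; gc9).
  set (F2 := RInt (fun y => fk y ^ 2) 0 1).
  assert (HF20 : 0 <= F2) by (apply RInt_sq_ge0; auto; lra).
  set (L1 := RInt (fun y => (Lker eps lam 1 y) ^ 2) 0 1).
  assert (HL10 : 0 <= L1).
  { unfold L1. rewrite Lker_fun. apply RInt_sq_ge0. lra. apply g2cont_sect, L_g2. }
  set (M := Mconst eps lam).
  set (beta := eps * q * kfun eps lam q 1 + eps * k1 eps lam q 1).
  assert (Ha1 : alpha1 eps lam q = 3 * (1 + sqrt M) ^ 2 * F2 + 6 * beta ^ 2 * L1).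
  { unfold alpha1, M, Mconst, F2, beta, L1. cbv zeta. rewrite Derive_k by auto.
    apply Rplus_eq_compat_r. apply Rmult_eq_compat_l. apply RInt_ext'. intros. unfold fk.
    rewrite Derive2_k by auto. reflexivity. }
  assert (Ha2 : alpha2 eps lam q = 6 * beta ^ 2).
  { unfold alpha2, beta. cbv zeta. rewrite Derive_k by auto. reflexivity. }
  set (P := RInt (fun y => kfun eps lam q y * p1 eps lam q y) 0 1).
  set (gam := lam * kfun eps lam q 0 / 2 + P).
  assert (Ha3 : alpha3 eps lam q = 6 * gam ^ 2) by reflexivity.
  assert (Hr1 : rho1 eps lam q = 6 * eps ^ 2 * kfun eps lam q 1 ^ 2) by reflexivity.
  assert (Hwt : wtilde eps lam q u uh 0 t = u 0 t - uh 0 t).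
  { unfold wtilde, utilde. rewrite RInt_point'. ring. }
  rewrite Ha1, Ha2, Ha3, Hr1, Hwt.
  assert (Hsq := sqrt_pos M).
  assert (HRHS0 : 0 <= 6 * eps ^ 2 * kfun eps lam q 1 ^ 2 * dhold eps lam q uh tj j t ^ 2 +
    (3 * (1 + sqrt M) ^ 2 * F2 + 6 * beta ^ 2 * L1) * N + 6 * beta ^ 2 * Wc eps lam Uc 1 ^ 2 +
    6 * gam ^ 2 * (u 0 t - uh 0 t) ^ 2).
  { repeat first [apply pow2_ge_0 | apply Rplus_le_le_0_compat | apply Rmult_le_pos | lra]. }
  destruct (classic (ex_RInt (fun y => kfun eps lam q y * uh y a) 0 1)) as [Hint|Hnint].
  2: {
    assert (Hni : forall s, a < s < b -> ~ ex_RInt (fun y => kfun eps lam q y * (uh y a - uh y s)) 0 1).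
    { intros s Hs H. apply Hnint.
      apply (ex_RInt_ext' (fun y => kfun eps lam q y * (uh y a - uh y s) + kfun eps lam q y * uh (cl y) s)).
      intros y Hy. rewrite Rmin_left, Rmax_right in Hy by lra. rewrite (cl_id y) by lra. ring.
      apply ex_RInt_plus'; auto. apply ex_RInt_gcont. apply gcont_mult; auto.
      apply (cont_rect_gcont uh a b s C0 Hs). }
    assert (Hloc : locally t (fun s => dhold eps lam q uh tj j t = dhold eps lam q uh tj j s)).
    { apply (filter_imp (fun s => a < s < b)). 2: apply loc_int; auto.
      intros s Hs. unfold dhold. apply RInt_nonint; apply Hni; auto. }
    assert (Hd : is_derive (dhold eps lam q uh tj j) t 0).
    { apply (is_derive_ext_loc (fun _ => dhold eps lam q uh tj j t)); auto. apply isd_const. }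
    split. eexists; eauto. rewrite (is_derive_unique _ _ _ Hd). nra. }
  set (G := fun s => RInt (fun y => kfun eps lam q y * uh (cl y) s) 0 1).
  set (Utc := fun y => Defs.Dt uh (cl y) t).
  assert (HUtc : gcont Utc) by (apply (cont_rect_gcont (Defs.Dt uh) a b t Ct Ht)).
  set (Dtv := RInt (fun y => kfun eps lam q y * Utc y) 0 1).
  assert (HG : is_derive G t Dtv).
  { unfold G, Dtv, Utc.
    assert (E : RInt (fun y => kfun eps lam q y * Defs.Dt uh (cl y) t) 0 1 =
      RInt (fun y => Derive (fun s => kfun eps lam q y * uh (cl y) s) t) 0 1).
    { apply RInt_ext'; intros. rewrite Derive_scal. reflexivity. }
    rewrite E.
    apply (is_derive_RInt_param (fun s y => kfun eps lam q y * uh (cl y) s) 0 1 t).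
    - apply (filter_imp (fun s => a < s < b)). 2: apply loc_int; auto.
      intros s Hs y Hy. apply ex_derive_scal. apply (Hex (cl y) s (cl_range y) Hs).
    - intros y Hy. apply (continuity_2d_pt_ext (fun u v => kfun eps lam q v * Defs.Dt uh (cl v) u)).
      intros; rewrite Derive_scal; reflexivity.
      apply continuity_2d_pt_mult. apply g2cont_2; auto. apply (cont_rect_2d (Defs.Dt uh) a b t y Ct Ht).
    - apply (filter_imp (fun s => a < s < b)). 2: apply loc_int; auto.
      intros s Hs. apply ex_RInt_gcont, gcont_mult; auto. apply (cont_rect_gcont uh a b s C0 Hs). }
  set (Uin0 := RInt (fun y => kfun eps lam q y * uh y a) 0 1).
  assert (HA1 : forall s, a < s < b -> dhold eps lam q uh tj j s = Uin0 - G s).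
  { intros s Hs. unfold dhold, Uin0, G. fold a.
    rewrite <- RInt_minus'. apply RInt_ext'. intros y Hy. rewrite Rmin_left, Rmax_right in Hy by lra.
    rewrite (cl_id y) by lra. ring.
    auto. apply ex_RInt_gcont, gcont_mult; auto. apply (cont_rect_gcont uh a b s C0 Hs). }
  assert (Hd : is_derive (dhold eps lam q uh tj j) t (- Dtv)).
  { apply (is_derive_ext_loc (fun s => Uin0 - G s)).
    apply (filter_imp (fun s => a < s < b)). 2: apply loc_int; auto.
    intros s Hs; symmetry; apply HA1; auto.
    apply (isd_eq _ _ (0 - Dtv)). apply (isd_minus (fun _ => Uin0) G). apply isd_const. exact HG. ring. }
  split. eexists; eauto. rewrite (is_derive_unique _ _ _ Hd).
  destruct (Hpde t Ht) as [_ [_ [_ [Hpuh [Huh0 Huh1]]]]].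
  set (u0 := u 0 t - uh 0 t) in *.
  set (U1c := fun y => Defs.Dx uh (cl y) t). set (U2c := fun y => Defs.Dx (Defs.Dx uh) (cl y) t).
  assert (HU1 : gcont U1c) by (apply (cont_rect_gcont (Defs.Dx uh) a b t C1' Ht)).
  assert (HU2 : gcont U2c) by (apply (cont_rect_gcont (Defs.Dx (Defs.Dx uh)) a b t C2 Ht)).
  set (k := kfun eps lam q) in *.
  assert (HB1 : Dtv = eps * RInt (fun y => k y * U2c y) 0 1 + lam * RInt (fun y => k y * Uc y) 0 1 + u0 * P).
  { assert (HP2 : u0 <> 0 -> ex_RInt (fun y => u0 * (k y * p1 eps lam q y)) 0 1).
    { intros Hu0.
      apply (ex_RInt_ext' (fun y => k y * Utc y - eps * (k y * U2c y) - lam * (k y * Uc y))).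
      intros y Hy. rewrite Rmin_left, Rmax_right in Hy by lra.
      unfold Utc, U2c, Uc. rewrite (cl_id y) by lra. rewrite Hpuh by lra. ring.
      ri. }
    destruct (Req_dec u0 0) as [Hu0|Hu0].
    - rewrite Hu0, Rmult_0_l, Rplus_0_r. unfold Dtv.
      rewrite <- !RInt_scal', <- RInt_plus'. apply RInt_ext'. intros y Hy. rewrite Rmin_left, Rmax_right in Hy by lra.
      unfold Utc, U2c, Uc. rewrite (cl_id y) by lra. rewrite Hpuh by lra. rewrite Hu0. ring.
      1-4: ri.
    - unfold Dtv. rewrite (RInt_ext' (fun y => k y * Utc y) (fun y => (eps * (k y * U2c y) + lam * (k y * Uc y)) + u0 * (k y * p1 eps lam q y))).
      2: { intros y Hy. rewrite Rmin_left, Rmax_right in Hy by lra.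
           unfold Utc, U2c, Uc. rewrite (cl_id y) by lra. rewrite Hpuh by lra. ring. }
      rewrite RInt_plus'. 2: ri. 2: auto.
      rewrite RInt_plus'. 2: ri. 2: ri.
      rewrite !RInt_scal'. unfold P. reflexivity.
      apply (ex_RInt_ext' (fun y => / u0 * (u0 * (k y * p1 eps lam q y)))). intros; field; auto.
      apply ex_RInt_scal'; auto. ri. ri. }
  assert (HI1 : RInt (fun y => k1 eps lam q y * U1c y + k y * U2c y) 0 1 =
      k 1 * Defs.Dx uh 1 t - k 0 * Defs.Dx uh 0 t).
  { apply (FTC01 (fun y => k y * Defs.Dx uh y t)
      (fun y => k1 eps lam q y * Defs.Dx uh y t + k y * Defs.Dx (Defs.Dx uh) y t)).
    - intros y Hy. apply (isd_mult k (fun z => Defs.Dx uh z t)). apply kfun_der; auto.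
      change (Defs.Dx (Defs.Dx uh) y t) with (Derive (fun z => Defs.Dx uh z t) y).
      apply Derive_correct. apply (Hex y t Hy Ht).
    - intros y Hy. unfold U1c, U2c. rewrite (cl_id y Hy). reflexivity.
    - gc9. }
  assert (HI2 : RInt (fun y => k2 eps lam q y * Uc y + k1 eps lam q y * U1c y) 0 1 =
      k1 eps lam q 1 * uh 1 t - k1 eps lam q 0 * uh 0 t).
  { apply (FTC01 (fun y => k1 eps lam q y * uh y t)
      (fun y => k2 eps lam q y * uh y t + k1 eps lam q y * Defs.Dx uh y t)).
    - intros y Hy. apply (isd_mult (k1 eps lam q) (fun z => uh z t)). apply k1_der; auto.
      change (Defs.Dx uh y t) with (Derive (fun z => uh z t) y).
      apply Derive_correct. apply (Hex y t Hy Ht).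
    - intros y Hy. unfold U1c, Uc. rewrite (cl_id y Hy). reflexivity.
    - gc9. }
  rewrite RInt_plus' in HI1 by ri. rewrite RInt_plus' in HI2 by ri.
  rewrite k1_0 in HI2 by auto.
  set (Bv := RInt (fun y => fk y * Uc y) 0 1).
  assert (HBv : Bv = eps * RInt (fun y => k2 eps lam q y * Uc y) 0 1 + eps * k 1 * RInt (fun y => k y * Uc y) 0 1
     + lam * RInt (fun y => k y * Uc y) 0 1).
  { unfold Bv, fk. rewrite (RInt_ext' (fun y => (eps * k2 eps lam q y + eps * k 1 * k y + lam * k y) * Uc y)
      (fun y => (eps * (k2 eps lam q y * Uc y) + (eps * k 1) * (k y * Uc y)) + lam * (k y * Uc y))).
    2: intros; ring.
    rewrite RInt_plus' by ri. rewrite RInt_plus' by ri. rewrite !RInt_scal' by ri. reflexivity. }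
  assert (Huh1' : uh 1 t = Wc eps lam Uc 1 + Tc eps lam Uc 1).
  { rewrite <- Uc_inv; auto. unfold Uc. rewrite cl_id; auto; lra. }
  assert (Hdd : dhold eps lam q uh tj j t = Uin0 - RInt (fun y => k y * Uc y) 0 1) by (apply HA1; auto).
  assert (HUin : Uin eps lam q uh tj j = Uin0) by reflexivity.
  assert (Hexpr : - Dtv = - eps * k 1 * dhold eps lam q uh tj j t - Bv +
      beta * (Wc eps lam Uc 1 + Tc eps lam Uc 1) - gam * u0).
  { unfold beta, gam. rewrite <- Huh1'.
    apply (alg eps lam q (k 0) (k 1) (k1 eps lam q 1) (RInt (fun y => k y * Uc y) 0 1)
      (RInt (fun y => k1 eps lam q y * U1c y) 0 1) (RInt (fun y => k y * U2c y) 0 1)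
      (RInt (fun y => k2 eps lam q y * Uc y) 0 1) P u0 (Defs.Dx uh 0 t) (Defs.Dx uh 1 t) (uh 1 t) Uin0).
    all: try assumption. all: try lra.
    all: try (rewrite <- HUin, <- Huh1; ring).
    all: try (rewrite Huh0; unfold p10; reflexivity).
    }
  rewrite Hexpr.
  assert (HCS : Bv ^ 2 <= F2 * RInt (fun x => Uc x ^ 2) 0 1) by (apply CS; auto; lra).
  assert (HUb := Uc_bound eps lam He Uc HUc). fold M in HUb. fold N in HUb.
  assert (HTb := T1_bound eps lam He Uc HUc). fold L1 in HTb. fold N in HTb.
  assert (HB2 : Bv ^ 2 <= F2 * ((1 + sqrt M) ^ 2 * N)).
  { eapply Rle_trans. apply HCS. apply Rmult_le_compat_l; auto. }
  assert (HT2 : beta ^ 2 * Tc eps lam Uc 1 ^ 2 <= beta ^ 2 * (L1 * N)).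
  { apply Rmult_le_compat_l; auto. apply pow2_ge_0. }
  pose proof (sq5 (- eps * k 1 * dhold eps lam q uh tj j t) (- Bv) (beta * Wc eps lam Uc 1)
     (beta * Tc eps lam Uc 1) (- gam * u0)) as H5.
  replace (- eps * k 1 * dhold eps lam q uh tj j t - Bv + beta * (Wc eps lam Uc 1 + Tc eps lam Uc 1) - gam * u0)
    with (- eps * k 1 * dhold eps lam q uh tj j t + - Bv + beta * Wc eps lam Uc 1 + beta * Tc eps lam Uc 1 + - gam * u0) by ring.
  eapply Rle_trans. apply H5.
  assert (E1 : (- eps * k 1 * dhold eps lam q uh tj j t) ^ 2 = eps ^ 2 * k 1 ^ 2 * dhold eps lam q uh tj j t ^ 2) by ring.
  assert (E2 : (- Bv) ^ 2 = Bv ^ 2) by ring.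
  assert (E3 : (beta * Wc eps lam Uc 1) ^ 2 = beta ^ 2 * Wc eps lam Uc 1 ^ 2) by ring.
  assert (E4 : (beta * Tc eps lam Uc 1) ^ 2 = beta ^ 2 * Tc eps lam Uc 1 ^ 2) by ring.
  assert (E5 : (- gam * u0) ^ 2 = gam ^ 2 * u0 ^ 2) by ring.
  rewrite E1, E2, E3, E4, E5.
  nra.
Qed.
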